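(* Let $T,T'$ be tiling classes, $\mathcal N$ an approximating sub-almost-groupoid of $\mathcal M_{II}$, and $\hat\varphi:\mathcal N\to\mathcal M'_{II}$ a map which preserves composability, commutes with the inverse map, and satisfies (1) $\hat\varphi(c)\hat\varphi(c')\preceq\hat\varphi(cc')$ for all composable $c,c'\in\mathcal N$, and (2) there is $t>0$ such that $|\mathrm{rad}(\hat\varphi(u))-t\,\mathrm{rad}(u)|$ is a bounded function on the units. Then $\varphi[\lim u_\nu,c]_{\mathcal N}:=[\lim\hat\varphi(u_\nu),\hat\varphi(c)]$ is well defined and defines a (continuous) groupoid homomorphism $\varphi:\mathcal R_{\mathcal N}\to\mathcal R'$.
   Context: Tilings (finite local complexity): a $d$-dimensional tiling is a countable family of bounded closed subsets of $\mathbb R^d$ (tiles, closures of interiors, finitely many decorations) covering $\mathbb R^d$, overlapping only at boundaries, up to translation; finitely many classes of pairs of touching tiles. $\mathcal M_{II}$ ($\mathcal M'_{II}$ for $T'$): doubly pointed pattern classes $M_{xy}$; $M_{x_1x_2}\preceq N_{y_1y_2}$ if $N$ contains a translate of $M$ with $x_i$ on $y_i$; $c\vdash c'$ if some $L_{z_1z_2}$ and tile $z$ of $L$ satisfy $c\preceq L_{z_1z}$, $c'\preceq L_{zz_2}$, with $cc'$ the minimal such $L_{z_1z_2}$; $(M_{xy})^{-1}=M_{yx}$; units $M_{xx}$; $L(c)=cc^{-1}$, $R(c)=c^{-1}c$; $\mathrm{rad}(u)$ the largest $r$ such that $u$ covers all $r$-balls centred in its pointed tile. A sub-almost-groupoid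 is a subset closed under inverses and products of composable elements. Hull $\Omega$: completion of pointed tilings $T_x$ under $d(\omega,\omega')=e^{-\sup\{r:M_r(\omega)=M_r(\omega')\}}$ ($M_r(\omega)$ the smallest pointed pattern around the pointed tile covering all $r$-balls centred in it). An approximating sequence is a sequence of units $u_\nu$ with $u_1\cdots u_k\vdash u_{k+1}$ for all $k$ and $\mathrm{rad}(u_\nu)\to\infty$; $\lim u_\nu$ is the pointed tiling containing all $u_\nu$ at its pointed tile. $u\preceq\omega$ if $u$ occurs at $\omega$'s pointed tile; $U_u=\{\omega:u\preceq\omega\}$; $\omega\cdot c$ the pointed tiling with pointer moved along $c$ ($L(c)\preceq\omega$). $\Omega_{\mathcal N}=\bigcup_{c\in\mathcal N}U_{R(c)}$; $\mathcal N$ approximating: every $\omega\in\Omega_{\mathcal N}$ is the limit of an approximating sequence in $\mathcal N$. $\mathcal R'$: classes $[\omega,c]$ ($L(c)\preceq\omega$) where $(\omega,c)\sim(\omega,c')$ iff some unit $u\preceq\omega$ has $uc=uc'$, product $[\omega,c][\omega\cdot c,c']=[\omega,cc']$, inverse $[\omega\cdot c,c^{-1}]$, topology generated by $\{[\omega,c]:L(c)\preceq\omega\}$. $\mathcal R_{\mathcal N}$: the classes $[\omega,c]_{\mathcal N}$ with $\omega\in\Omega_{\mathcal N}$, $c\in\mathcal N$, $L(c)\preceq\omega$ under the same equivalence restricted to $c\in\mathcal N$, with the analogous groupoid structure and quotient topology. *)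

(* Defs.v *)
From HB Require Import structures.
From mathcomp Require Import all_boot all_order all_algebra.
From mathcomp Require Import all_classical all_reals all_analysis.
Set Implicit Arguments. Unset Strict Implicit. Unset Printing Implicit Defensive.
Import Order.TTheory GRing.Theory Num.Theory.
Import numFieldNormedType.Exports.
Local Open Scope classical_set_scope.
Local Open Scope ring_scope.

Section Tilings.
Variables (R : realType) (d : nat).

Local Notation pt := ('rV[R]_d).

Definition enorm (v : pt) : R := Num.sqrt (\sum_(i < d) (v 0 i) ^+ 2).
Definition eball (x : pt) (r : R) : set pt := [set y | enorm (y - x) < r].

(** A tile: a subset of R^d with a decoration (label). *)
Record tile := Tile { tpts : set pt ; tdec : nat }.

Definition ttr (v : pt) (t : tile) : tile :=
  Tile [set x + v | x in tpts t] (tdec t).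

Definition ptr (v : pt) (P : set tile) : set tile := ttr v @` P.

Definition touching (t t' : tile) := tpts t `&` tpts t' !=set0.

Definition is_tiling (S : set tile) : Prop :=
  [/\ countable S,
      (forall t, S t -> [/\ tpts t !=set0,
                            (exists M : R, forall x, tpts t x -> enorm x <= M),
                            closed (tpts t) &
                            closure (interior (tpts t)) = tpts t]),
      (exists n, forall t, S t -> (tdec t < n)%N),
      (forall x : pt, exists t, S t /\ tpts t x) /\
      (forall t t', S t -> S t' -> t <> t' ->
          interior (tpts t) `&` interior (tpts t') = set0) &
      (* finite local complexity: finitely many translation classes of
         pairs of touching tiles *)
      (exists (n : nat) (f : nat -> tile * tile),
          forall t t', S t -> S t' -> touching t t' ->
            exists i, (i < n)%N /\ (exists v : pt,
              t = ttr v (f i).1 /\ t' = ttr v (f i).2))].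

Record dpp := DP { dpP : set tile ; dpx : tile ; dpy : tile }.

Definition dptr (v : pt) (p : dpp) : dpp :=
  DP (ptr v (dpP p)) (ttr v (dpx p)) (ttr v (dpy p)).

Definition tclass (p : dpp) : set dpp := [set q | exists v, q = dptr v p].

Definition Tpat (T : set tile) (p : dpp) : Prop :=
  [/\ finite_set (dpP p), dpP p (dpx p), dpP p (dpy p) & dpP p `<=` T].

Definition MII (T : set tile) : set (set dpp) :=
  [set c | exists2 p, Tpat T p & c = tclass p].

Definition dle (c c' : set dpp) : Prop :=
  exists p q, [/\ c p, c' q, dpP p `<=` dpP q, dpx p = dpx q & dpy p = dpy q].

Definition dp_inv (c : set dpp) : set dpp := [set q | c (DP (dpP q) (dpy q) (dpx q))].

Definition composable (T : set tile) (c c' : set dpp) : Prop :=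
  exists (P : set tile) (z1 z z2 : tile),
    [/\ Tpat T (DP P z1 z2), P z,
        dle c (tclass (DP P z1 z)) & dle c' (tclass (DP P z z2))].

(** cc' : the minimal L_{z1z2} as above, i.e. the union of the two patterns
    glued along the common tile. *)
Definition dp_mul (c c' : set dpp) : set dpp :=
  [set q | exists p p', [/\ c p, c' p', dpy p = dpx p' &
                           q = DP (dpP p `|` dpP p') (dpx p) (dpy p')]].

Definition Lu (c : set dpp) := dp_mul c (dp_inv c).
Definition Ru (c : set dpp) := dp_mul (dp_inv c) c.

Definition is_unit (T : set tile) (c : set dpp) : Prop :=
  MII T c /\ exists2 p, c p & dpx p = dpy p.

Definition covers (P : set tile) (A : set pt) : Prop :=
  A `<=` \bigcup_(t in P) tpts t.

Definition region (x : tile) (r : R) : set pt :=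
  [set y | exists2 p, tpts x p & eball p r y].

Definition rad (c : set dpp) : R :=
  sup [set r | 0 <= r /\ exists2 p, c p & covers (dpP p) (region (dpx p) r)].

Record ptil := PT { pS : set tile ; ps : tile }.

Definition pteq (w w' : ptil) : Prop :=
  exists v, pS w' = ptr v (pS w) /\ ps w' = ttr v (ps w).

Definition is_Mr (w : ptil) (r : R) (P : set tile) : Prop :=
  [/\ P `<=` pS w, covers P (region (ps w) r) &
      forall P', P' `<=` pS w -> covers P' (region (ps w) r) -> P `<=` P'].

Definition Mr_eq (w w' : ptil) (r : R) : Prop :=
  exists P P', [/\ is_Mr w r P, is_Mr w' r P' &
     exists v, P' = ptr v P /\ ps w' = ttr v (ps w)].

(** The hull Omega of T: pointed tilings all of whose patterns M_r
    agree with some M_r(T_x) (elements of the completion). *)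
Definition hull (T : set tile) : set ptil :=
  [set w | [/\ is_tiling (pS w), pS w (ps w) &
            forall r : R, exists x, T x /\ Mr_eq w (PT T x) r]].

(** {w' : d(w,w') < e^{-Rr}} *)
Definition hball (w : ptil) (Rr : R) : set ptil :=
  [set w' | exists2 r, Rr < r & Mr_eq w w' r].

Definition occurs_at (c : set dpp) (w : ptil) : Prop :=
  exists2 p, c p & dpP p `<=` pS w /\ dpx p = ps w.

Definition Uu (T : set tile) (u : set dpp) : set ptil :=
  [set w | hull T w /\ occurs_at u w].

Definition moved (w : ptil) (c : set dpp) (w' : ptil) : Prop :=
  exists2 p, c p & [/\ dpP p `<=` pS w, dpx p = ps w & w' = PT (pS w) (dpy p)].

Fixpoint uprod (u : nat -> set dpp) (k : nat) : set dpp :=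
  match k with 0 => u 0%N | k.+1 => dp_mul (uprod u k) (u k.+1) end.

Definition approx_seq (T : set tile) (u : nat -> set dpp) : Prop :=
  [/\ forall n, is_unit T (u n),
      forall k, composable T (uprod u k) (u k.+1) &
      forall M : R, exists n0, forall n, (n0 <= n)%N -> M <= rad (u n)].

Definition is_lim (u : nat -> set dpp) (w : ptil) : Prop :=
  [/\ is_tiling (pS w), pS w (ps w) & forall n, occurs_at (u n) w].

Definition sub_almost_groupoid (T : set tile) (N : set (set dpp)) : Prop :=
  [/\ N `<=` MII T,
      forall c, N c -> N (dp_inv c) &
      forall c c', N c -> N c' -> composable T c c' -> N (dp_mul c c')].

Definition OmegaN (T : set tile) (N : set (set dpp)) : set ptil :=
  [set w | exists2 c, N c & Uu T (Ru c) w].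

Definition approximating (T : set tile) (N : set (set dpp)) : Prop :=
  forall w, OmegaN T N w ->
    exists u, [/\ approx_seq T u, forall n, N (u n) & is_lim u w].

Definition gcl (T : set tile) (w : ptil) (c : set dpp) : set (ptil * set dpp) :=
  [set q | [/\ pteq w q.1, MII T q.2, occurs_at (Lu q.2) q.1 &
     exists u, [/\ is_unit T u, occurs_at u w & dp_mul u c = dp_mul u q.2]]].

Definition Rgpd (T : set tile) : set (set (ptil * set dpp)) :=
  [set g | exists w c, [/\ hull T w, MII T c, occurs_at (Lu c) w & g = gcl T w c]].

Definition gmul (T : set tile) (g h k : set (ptil * set dpp)) : Prop :=
  exists w c c' w1, [/\ [/\ hull T w, MII T c, MII T c' & occurs_at (Lu c) w],
     moved w c w1, occurs_at (Lu c') w1, composable T c c' &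
     [/\ g = gcl T w c, h = gcl T w1 c' & k = gcl T w (dp_mul c c')]].

Definition Ogen (T : set tile) (c : set dpp) : set (set (ptil * set dpp)) :=
  [set g | exists w, [/\ hull T w, occurs_at (Lu c) w & g = gcl T w c]].

Definition gopen (T : set tile) (V : set (set (ptil * set dpp))) : Prop :=
  V `<=` Rgpd T /\
  forall g, V g -> exists (n : nat) (f : nat -> set dpp),
    [/\ forall i, (i < n)%N -> MII T (f i),
        forall i, (i < n)%N -> Ogen T (f i) g &
        forall g', Rgpd T g' -> (forall i, (i < n)%N -> Ogen T (f i) g') -> V g'].

Definition XN (T : set tile) (N : set (set dpp)) : set (ptil * set dpp) :=
  [set q | [/\ OmegaN T N q.1, N q.2 & occurs_at (Lu q.2) q.1]].

Definition gclN (T : set tile) (N : set (set dpp)) (w : ptil) (c : set dpp)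
  : set (ptil * set dpp) :=
  [set q | [/\ pteq w q.1, XN T N q &
     exists u, [/\ is_unit T u, occurs_at u w & dp_mul u c = dp_mul u q.2]]].

Definition RN (T : set tile) (N : set (set dpp)) : set (set (ptil * set dpp)) :=
  [set g | exists w c, XN T N (w, c) /\ g = gclN T N w c].

Definition gmulN (T : set tile) (N : set (set dpp)) (g h k : set (ptil * set dpp)) :=
  exists w c c' w1, [/\ XN T N (w, c) /\ N c', moved w c w1, XN T N (w1, c'),
     composable T c c' &
     [/\ g = gclN T N w c, h = gclN T N w1 c' & k = gclN T N w (dp_mul c c')]].

(** Open subsets of X_N = {(w,c)} (topology of Omega x N with N discrete);
    R_N carries the quotient topology. *)
Definition XNopen (T : set tile) (N : set (set dpp)) (W : set (ptil * set dpp)) :=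
  W `<=` XN T N /\
  forall w c, W (w, c) -> exists Rr : R,
    forall w', XN T N (w', c) -> hball w Rr w' -> W (w', c).

End Tilings.

(* Main.v *)
Require Import Defs.
From HB Require Import structures.
From mathcomp Require Import all_boot all_order all_algebra.
From mathcomp Require Import all_classical all_reals all_analysis.
From mathcomp Require Import lra ring.
Set Implicit Arguments. Unset Strict Implicit. Unset Printing Implicit Defensive.
Import Order.TTheory GRing.Theory Num.Theory.
Import numFieldNormedType.Exports.
Import Defs.
Local Open Scope classical_set_scope.
Local Open Scope ring_scope.



Section Geo.
Variables (R : realType) (d : nat).
Local Notation pt := ('rV[R]_d).
Local Notation tile := (tile R d).
Local Notation dpp := (dpp R d).
Implicit Types (t : tile) (P Q : set tile) (p : dpp) (v a b : pt).

Lemma tileE (t t' : tile) : tpts t = tpts t' -> tdec t = tdec t' -> t = t'.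
Proof. by case: t => ? ?; case: t' => ? ? /= -> ->. Qed.

Lemma imgD0 (A : set pt) : [set x + 0 | x in A] = A.
Proof.
apply/seteqP; split => x; first by case=> y Ay <-; rewrite addr0.
by move=> Ax; exists x => //; rewrite addr0.
Qed.

Lemma imgDD (A : set pt) a b :
  [set x + a | x in [set y + b | y in A]] = [set x + (b + a) | x in A].
Proof.
apply/seteqP; split => x.
  by case=> y [z Az <-] <-; exists z => //; rewrite addrA.
by case=> z Az <-; exists (z + b); [exists z|rewrite addrA].
Qed.

Lemma ttr0 t : ttr 0 t = t.
Proof. by apply: tileE => //=; rewrite imgD0. Qed.

Lemma ttrD a b t : ttr a (ttr b t) = ttr (b + a) t.
Proof. by apply: tileE => //=; rewrite imgDD. Qed.

Lemma ttrK v t : ttr (- v) (ttr v t) = t.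
Proof. by rewrite ttrD subrr ttr0. Qed.

Lemma ttrKV v t : ttr v (ttr (- v) t) = t.
Proof. by rewrite ttrD addNr ttr0. Qed.

Lemma ttr_inj v : injective (ttr v).
Proof. by move=> t t' e; rewrite -(ttrK v t) e ttrK. Qed.

Lemma ptr0 (P : set tile) : ptr 0 P = P.
Proof.
apply/seteqP; split => x; first by case=> y Py <-; rewrite ttr0.
by move=> Px; exists x => //; rewrite ttr0.
Qed.

Lemma ptrD a b (P : set tile) : ptr a (ptr b P) = ptr (b + a) P.
Proof.
apply/seteqP; split => x.
  by case=> y [z Pz <-] <-; exists z => //; rewrite ttrD.
by case=> z Pz <-; exists (ttr b z); [exists z|rewrite ttrD].
Qed.

Lemma ptrK v P : ptr (- v) (ptr v P) = P.
Proof. by rewrite ptrD subrr ptr0. Qed.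

Lemma ptrE v P t : ptr v P (ttr v t) <-> P t.
Proof.
split; last by move=> Pt; exists t.
by case=> t' Pt' /ttr_inj <-.
Qed.

Lemma ptrE' v P t : ptr v P t <-> P (ttr (- v) t).
Proof. by rewrite -{1}(ttrKV v t) ptrE. Qed.

Lemma ptrS v (P Q : set tile) : P `<=` Q -> ptr v P `<=` ptr v Q.
Proof. by move=> PQ t [t' /PQ Qt' <-]; exists t'. Qed.

Lemma ptrU v (P Q : set tile) : ptr v (P `|` Q) = ptr v P `|` ptr v Q.
Proof. exact: image_setU. Qed.

Lemma ptr_finite v (P : set tile) : finite_set P -> finite_set (ptr v P).
Proof. exact: finite_image. Qed.

Lemma dptrD a b p : dptr a (dptr b p) = dptr (b + a) p.
Proof. by rewrite /dptr /= ptrD !ttrD. Qed.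

Lemma dptr0 p : dptr 0 p = p.
Proof. by case: p => P x y; rewrite /dptr /= ptr0 !ttr0. Qed.

Lemma dptrK v p : dptr (- v) (dptr v p) = p.
Proof. by rewrite dptrD subrr dptr0. Qed.

Lemma enorm_ge0 v : 0 <= enorm v.
Proof. exact: sqrtr_ge0. Qed.

Lemma sum_sq_ge0 (v : pt) : 0 <= \sum_(i < d) (v 0 i) ^+ 2.
Proof. by apply: sumr_ge0 => i _; exact: sqr_ge0. Qed.

Lemma coord_le_enorm v i : `|v 0 i| <= enorm v.
Proof.
rewrite /enorm -sqrtr_sqr; apply: ler_wsqrtr.
rewrite (bigD1 i) //= lerDl; apply: sumr_ge0 => j _; exact: sqr_ge0.
Qed.

Lemma enormN v : enorm (- v) = enorm v.
Proof. by rewrite /enorm; congr Num.sqrt; apply: eq_bigr => i _; rewrite mxE sqrrN. Qed.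

Lemma enorm_eq0 v : enorm v = 0 -> v = 0.
Proof.
move=> /eqP; rewrite /enorm sqrtr_eq0 => h.
have h0 : \sum_(i < d) (v 0 i) ^+ 2 = 0.
  by apply/eqP; rewrite eq_le h sum_sq_ge0.
apply/rowP => i; rewrite mxE; apply/eqP; rewrite -sqrf_eq0.
move/eqP: h0; rewrite psumr_eq0; last by move=> j _; exact: sqr_ge0.
by move=> /allP /(_ i); rewrite mem_index_enum; apply.
Qed.

Lemma enormD_le u v : enorm (u + v) <= 2 * (enorm u + enorm v).
Proof.
have hu := enorm_ge0 u; have hv := enorm_ge0 v.
rewrite -[2 * _]ger0_norm ?mulr_ge0 ?addr_ge0 //.
rewrite /enorm -sqrtr_sqr; apply: ler_wsqrtr.
apply: (@le_trans _ _ (\sum_(i < d) (2 * ((u 0 i) ^+ 2 + (v 0 i) ^+ 2)))).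
  apply: ler_sum => i _; rewrite mxE.
  have := sqr_ge0 (u 0 i - v 0 i); lra.
rewrite -mulr_sumr big_split /=.
have hsu := sum_sq_ge0 u; have hsv := sum_sq_ge0 v.
have eu : Num.sqrt (\sum_(i < d) u 0 i ^+ 2) ^+ 2 = \sum_(i < d) u 0 i ^+ 2 by rewrite sqr_sqrtr.
have ev : Num.sqrt (\sum_(i < d) v 0 i ^+ 2) ^+ 2 = \sum_(i < d) v 0 i ^+ 2 by rewrite sqr_sqrtr.
move: hu hv; rewrite /enorm => hu hv.
set a := Num.sqrt _ in hu eu *; set b := Num.sqrt _ in hv ev *.
rewrite -eu -ev; nra.
Qed.


Definition bnd (A : set pt) := A !=set0 /\ exists M, forall x, A x -> enorm x <= M.

Lemma img_fix (A : set pt) a : bnd A -> [set x + a | x in A] = A -> a = 0.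
Proof.
move=> [[x0 Ax0] [M hM]] e.
have hn : forall n, A (x0 + a *+ n).
  elim=> [|n ih]; first by rewrite mulr0n addr0.
  suff : [set x + a | x in A] (x0 + a *+ n.+1) by rewrite e.
  by exists (x0 + a *+ n) => //; rewrite mulrSr addrA.
apply/rowP => i; rewrite mxE; apply/eqP/negPn/negP => ai0.
have Hn n : `|a 0 i| *+ n <= M + `|x0 0 i|.
  have h1 := le_trans (coord_le_enorm (x0 + a *+ n) i) (hM _ (hn n)).
  move: h1; rewrite !mxE mulmxnE => h1.
  have := ler_normD (x0 0 i + a 0 i *+ n) (- x0 0 i).
  rewrite addrC addKr normrMn normrN => h2; lra.
have apos : 0 < `|a 0 i| by rewrite normr_gt0.
have C0 : 0 <= (M + `|x0 0 i|) / `|a 0 i|.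
  apply: divr_ge0 => //; have := Hn 0%N; rewrite mulr0n; lra.
have := archi_boundP C0; set k := Num.bound _ => hk.
have := Hn k; rewrite -mulr_natr -ler_pdivlMl //; rewrite mulrC => hk2.
by move: (lt_le_trans hk hk2); rewrite ltxx.
Qed.

Lemma img_inj (A : set pt) a b : bnd A ->
  [set x + a | x in A] = [set x + b | x in A] -> a = b.
Proof.
move=> bA e; apply/eqP; rewrite -subr_eq0; apply/eqP; apply: (img_fix bA).
by rewrite -imgDD e imgDD subrr imgD0.
Qed.

Lemma ttr_inj_v t a b : bnd (tpts t) -> ttr a t = ttr b t -> a = b.
Proof. by move=> bt /(congr1 (@tpts _ _)) /=; exact: img_inj. Qed.

Lemma bnd_tr (A : set pt) v : bnd A -> bnd [set x + v | x in A].
Proof.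
move=> [[x Ax] [M hM]]; split; first by exists (x + v), x.
exists (2 * (M + enorm v)) => _ [y Ay <-].
apply: le_trans (enormD_le _ _) _.
by rewrite ler_pM2l // lerD2r hM.
Qed.


Lemma img_preE (A : set pt) v : [set x + v | x in A] = [set y | A (y - v)].
Proof.
apply/seteqP; split => y; first by case=> x Ax <- /=; rewrite addrK.
by move=> Ayv; exists (y - v) => //; rewrite subrK.
Qed.

Lemma nbhs_tr (A : set pt) v x : nbhs (x + v) [set y + v | y in A] <-> nbhs x A.
Proof.
rewrite img_preE.
have h := nbhsDl [set y | A (y - v)] x v.
split => H.
  by move: (h.1 H); apply: filterS => y /=; rewrite addrK.
by apply: h.2; move: H; apply: filterS => y /=; rewrite addrK.
Qed.

Lemma interior_tr (A : set pt) v : [set x + v | x in A]° = [set x + v | x in A°].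
Proof.
apply/seteqP; split => z.
  move=> hz; exists (z - v); last by rewrite subrK.
  by rewrite /interior /= -(nbhs_tr A v) subrK.
by case=> x Ax <-; rewrite /interior /= nbhs_tr.
Qed.

Lemma setC_tr (A : set pt) v : ~` [set x + v | x in A] = [set x + v | x in ~` A].
Proof.
rewrite !img_preE; apply/seteqP; split => y //=.
Qed.

Lemma closure_tr (A : set pt) v : closure [set x + v | x in A] = [set x + v | x in closure A].
Proof.
have h (B : set pt) : closure B = ~` (~` B)° by rewrite interiorC setCK.
rewrite (h [set x + v | x in A]) (setC_tr A) interior_tr setC_tr -h //.
Qed.

Lemma closed_tr (A : set pt) v : closed A -> closed [set x + v | x in A].
Proof. by rewrite !closure_id closure_tr => <-. Qed.

Lemma ttr_interior t v : (tpts (ttr v t))° = [set x + v | x in (tpts t)°].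
Proof. exact: interior_tr. Qed.


Lemma cont_sum (T : topologicalType) (I : Type) (s : seq I) (f : I -> T -> R) x :
  (forall i, {for x, continuous (f i)}) ->
  {for x, continuous (fun y => \sum_(i <- s) f i y)}.
Proof.
move=> hf; elim: s => [|i s ih].
  have -> : (fun y => \sum_(j <- [::]) f j y) = (fun=> 0) by apply/funext => y; rewrite big_nil.
  exact: cst_continuous.
have -> : (fun y => \sum_(j <- i :: s) f j y) = (f i + (fun y => \sum_(j <- s) f j y)).
  by apply/funext => y; rewrite big_cons.
exact: continuousD.
Qed.

Lemma enorm_cont (p : pt) : continuous (fun y : pt => enorm (y - p)).
Proof.
move=> x; rewrite /enorm.
apply: (@continuous_comp _ _ _ (fun y : pt => \sum_(i < d) (y - p) 0 i ^+ 2) (@Num.sqrt R)); last first.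
  exact: sqrt_continuous.
apply: cont_sum => i.
have hc : {for x, continuous (fun y : pt => (y - p) 0 i)}.
  have -> : (fun y : pt => (y - p) 0 i) = ((fun y : pt => y 0 i) - (fun=> p 0 i)).
    by apply/funext => y; rewrite !mxE.
  apply: continuousB; first exact: coord_continuous.
  exact: cst_continuous.
have -> : (fun y : pt => (y - p) 0 i ^+ 2) = ((fun y : pt => (y - p) 0 i) \* (fun y : pt => (y - p) 0 i)).
  by apply/funext => y; rewrite expr2.
exact: continuousM.
Qed.

Lemma eball_open (p : pt) r : open (eball p r).
Proof.
have -> : eball p r = (fun y : pt => enorm (y - p)) @^-1` [set z | z < r] by [].
apply: open_comp; last exact: open_lt.
by move=> y _; exact: enorm_cont.
Qed.

Lemma region_open (x : tile) r : open (region x r).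
Proof.
have -> : region x r = \bigcup_(p in tpts x) eball p r.
  by apply/seteqP; split => y [p hp hy]; exists p.
by apply: bigcup_open => p _; exact: eball_open.
Qed.


Lemma eball_tr (p : pt) v r : eball (p + v) r = [set y + v | y in eball p r].
Proof.
rewrite img_preE; apply/seteqP; split => y; rewrite /eball /=;
  by rewrite opprD addrA addrAC.
Qed.

Lemma region_tr (x : tile) v r : region (ttr v x) r = [set y + v | y in region x r].
Proof.
apply/seteqP; split => y.
  case=> _ [p xp <-]; rewrite eball_tr => -[z hz <-].
  by exists z => //; exists p.
case=> z [p xp hz] <-; exists (p + v); first by exists p.
by rewrite eball_tr; exists z.
Qed.

Lemma regionS (x : tile) (r r' : R) : r <= r' -> region x r `<=` region x r'.
Proof.
move=> rr y [p xp hy]; exists p => //; rewrite /eball /= in hy *.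
exact: lt_le_trans hy rr.
Qed.

Lemma region_in x (p z : pt) : tpts x p -> region x (enorm (z - p) + 1) z.
Proof. by move=> xp; exists p => //; rewrite /eball /= ltrDl. Qed.

Lemma covers_tr P (A : set pt) v : covers P A -> covers (ptr v P) [set y + v | y in A].
Proof.
move=> cPA _ [y Ay <-]; case: (cPA y Ay) => t Pt ty.
by exists (ttr v t); [exists t|exists y].
Qed.

Lemma covers_trE P (A : set pt) v : covers (ptr v P) [set y + v | y in A] -> covers P A.
Proof.
move=> h; have := covers_tr (v := - v) h; rewrite ptrK imgDD subrr imgD0 //.
Qed.

Lemma coversS P Q (A B : set pt) : P `<=` Q -> B `<=` A -> covers P A -> covers Q B.
Proof. by move=> PQ BA cPA y /BA /cPA [t Pt ty]; exists t => //; apply: PQ. Qed.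

Section Tiling.
Variable S : set tile.
Hypothesis tS : is_tiling S.

Lemma til_props t : S t -> [/\ tpts t !=set0, (exists M : R, forall x, tpts t x -> enorm x <= M),
   closed (tpts t) & closure (interior (tpts t)) = tpts t].
Proof. by case: tS => _ h _ _ _; exact: h. Qed.

Lemma til_bnd t : S t -> bnd (tpts t).
Proof. by move=> /til_props [h1 h2 _ _]. Qed.

Lemma til_cover (y : pt) : exists t, S t /\ tpts t y.
Proof. by case: tS => _ _ _ [h _] _. Qed.

Lemma til_overlap t t' : S t -> S t' -> t <> t' -> (tpts t)° `&` (tpts t')° = set0.
Proof. by case: tS => _ _ _ [_ h] _; exact: h. Qed.

Lemma til_int t : S t -> exists z, (tpts t)° z.
Proof.
move=> /til_props [[y ty] _ _ e].
have : closure (tpts t)° y by rewrite e.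
move=> /(_ setT); rewrite setIT; apply; exact: filterT.
Qed.

Lemma til_K1 t s (z : pt) : S t -> S s -> (tpts t)° z -> tpts s z -> s = t.
Proof.
move=> St Ss zt zs; apply: contrapT => st.
have /til_props [_ _ _ e] := Ss.
move: zs; rewrite -e => /(_ (tpts t)°).
have : nbhs z (tpts t)°.
  by have := open_interior (tpts t); rewrite openE => /(_ z zt).
move=> hn /(_ hn); rewrite (til_overlap Ss St st) => -[?[]].
Qed.

Lemma til_K3 P (A : set pt) t (z : pt) : P `<=` S -> covers P A -> S t -> (tpts t)° z -> A z -> P t.
Proof.
move=> PS cPA St zt /cPA [s Ps zs].
by rewrite -(til_K1 St (PS _ Ps) zt zs).
Qed.

End Tiling.

End Geo.



Section Cls.
Variables (R : realType) (d : nat).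
Local Notation pt := ('rV[R]_d).
Local Notation tile := (tile R d).
Local Notation dpp := (dpp R d).
Implicit Types (t : tile) (P Q : set tile) (p q : dpp) (v a b : pt) (A B C U V D E : set dpp).

Lemma setU_sub (X Y : set tile) : Y `<=` X -> X `|` Y = X.
Proof. by move=> h; apply/seteqP; split => t; [case=> // /h|left]. Qed.

Definition TC A := forall p v, A p -> A (dptr v p).
Definition TR A := forall p q, A p -> A q -> exists v, q = dptr v p.
Definition UQ A := forall p q, A p -> A q -> dpx p = dpx q -> p = q.
Definition UQy A := forall p q, A p -> A q -> dpy p = dpy q -> p = q.
Definition UN A := forall p, A p -> dpx p = dpy p.
Definition GC A := exists p0, A = tclass p0 /\ [/\ bnd (tpts (dpx p0)), bnd (tpts (dpy p0)),
   dpP p0 (dpx p0) & dpP p0 (dpy p0)].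

Lemma dpE p : DP (dpP p) (dpx p) (dpy p) = p.
Proof. by case: p. Qed.

Lemma tclass_self p : tclass p p.
Proof. by exists 0; rewrite dptr0. Qed.

Lemma TC_tclass p0 : TC (tclass p0).
Proof. by move=> p v [w ->]; exists (w + v); rewrite dptrD. Qed.

Lemma TR_tclass p0 : TR (tclass p0).
Proof. by move=> p q [a ->] [b ->]; exists (b - a); rewrite dptrD addrCA subrr addr0. Qed.

Lemma GC_TC A : GC A -> TC A.
Proof. by move=> [p0 [-> _]]; exact: TC_tclass. Qed.

Lemma GC_TR A : GC A -> TR A.
Proof. by move=> [p0 [-> _]]; exact: TR_tclass. Qed.

Lemma GC_UQ A : GC A -> UQ A.
Proof.
move=> [p0 [-> [bx _ _ _]]] p q [a ->] [b ->] /= /ttr_inj_v.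
by move=> /(_ bx) ->.
Qed.

Lemma GC_UQy A : GC A -> UQy A.
Proof.
move=> [p0 [-> [_ bx _ _]]] p q [a ->] [b ->] /= /ttr_inj_v.
by move=> /(_ bx) ->.
Qed.

Lemma GC_mem A p : GC A -> A p -> dpP p (dpx p) /\ dpP p (dpy p).
Proof.
move=> [p0 [-> [_ _ h1 h2]]] [a ->] /=; split; exact/ptrE.
Qed.

Lemma GC_ne A : GC A -> exists p, A p.
Proof. by move=> [p0 [-> _]]; exists p0; exact: tclass_self. Qed.

Definition swp p := DP (dpP p) (dpy p) (dpx p).

Lemma dp_invE A q : dp_inv A q <-> A (swp q).
Proof. by []. Qed.

Lemma dp_invK A : dp_inv (dp_inv A) = A.
Proof. by apply/seteqP; split => q; rewrite /dp_inv /= dpE. Qed.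

Lemma dp_inv_tclass p0 : dp_inv (tclass p0) = tclass (swp p0).
Proof.
apply/seteqP; split => q.
  case: q => P x y [v]; rewrite /swp /dptr /= => -[-> -> ->]; exists v.
  by case: p0.
by move=> [v ->]; exists v.
Qed.

Lemma GC_inv A : GC A -> GC (dp_inv A).
Proof.
move=> [p0 [-> [h1 h2 h3 h4]]]; exists (swp p0); split; first exact: dp_inv_tclass.
by split.
Qed.

Lemma TC_inv A : TC A -> TC (dp_inv A).
Proof. by move=> h p v; rewrite !dp_invE => /(h _ v). Qed.

Lemma TC_mul A B : TC A -> TC B -> TC (dp_mul A B).
Proof.
move=> hA hB _ v [p [p' [Ap Bp' e ->]]].
exists (dptr v p), (dptr v p'); split; [exact: hA|exact: hB| |].
  by rewrite /= e.
by rewrite /dptr /= ptrU.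
Qed.

Lemma UQ_mul A B : UQ A -> UQ B -> UQ (dp_mul A B).
Proof.
move=> hA hB _ _ [p [p' [Ap Bp' e ->]]] [q [q' [Aq Bq' e' ->]]] /= exq.
have epq := hA _ _ Ap Aq exq; subst q.
have := hB _ _ Bp' Bq'; rewrite -e -e' => /(_ erefl) ->.
by [].
Qed.

Lemma dp_mulA A B C : dp_mul (dp_mul A B) C = dp_mul A (dp_mul B C).
Proof.
apply/seteqP; split => q.
  move=> [_ [r [[p [p' [Ap Bp' e ->]]] Cr e2 ->]]] /=.
  exists p, (DP (dpP p' `|` dpP r) (dpx p') (dpy r)); split => //.
    by exists p', r; split.
  by rewrite /= setUA.
move=> [p [_ [Ap [p' [r [Bp' Cr e2 ->]]] e ->]]] /=.
exists (DP (dpP p `|` dpP p') (dpx p) (dpy p')), r; split => //.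
  by exists p, p'; split.
by rewrite /= setUA.
Qed.

Lemma dle_at A B q : dle A B -> TC A -> TR B -> B q ->
  exists p, [/\ A p, dpP p `<=` dpP q, dpx p = dpx q & dpy p = dpy q].
Proof.
move=> [p [q' [Ap Bq' sub ex ey]]] hA hB Bq.
have [v ->] := hB _ _ Bq' Bq.
exists (dptr v p); split; first exact: hA.
- exact: ptrS.
- by rewrite /= ex.
- by rewrite /= ey.
Qed.

Lemma dle_trans A B C : TC A -> TR B -> dle A B -> dle B C -> dle A C.
Proof.
move=> hA hB hAB [q [r [Bq Cr s1 ex ey]]].
have [p [Ap s2 ex' ey']] := dle_at hAB hA hB Bq.
exists p, r; split => //; [exact: subset_trans s2 s1|by rewrite ex'|by rewrite ey'].
Qed.

Definition placed A (w : ptil R d) p := [/\ A p, dpP p `<=` pS w & dpx p = ps w].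

Lemma occursP A w : occurs_at A w <-> exists p, placed A w p.
Proof.
split; first by move=> [p Ap [h1 h2]]; exists p.
by move=> [p [Ap h1 h2]]; exists p.
Qed.

Lemma occurs_dle A B w : dle A B -> TC A -> TR B -> occurs_at B w -> occurs_at A w.
Proof.
move=> hAB hA hB /occursP [q [Bq h1 h2]].
have [p [Ap s ex _]] := dle_at hAB hA hB Bq.
by exists p => //; split; [exact: subset_trans s h1|rewrite ex].
Qed.

Lemma occursL A w : occurs_at (Lu A) w <-> exists p, placed A w p.
Proof.
split.
  move=> [_ [p [p' [Ap _ _ ->]]] [/= h1 h2]].
  by exists p; split => //; apply: subset_trans h1; exact: subsetUl.
move=> [p [Ap h1 h2]]; exists (DP (dpP p `|` dpP p) (dpx p) (dpx p)).
  by exists p, (swp p); split => //=; rewrite dp_invE /swp /= dpE.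
by split => //=; rewrite setUid.
Qed.

Lemma LuE A q : UQy A -> Lu A q <-> exists2 p, A p & q = DP (dpP p) (dpx p) (dpx p).
Proof.
move=> hA; split.
  move=> [p [p' [Ap Ap' e ->]]]; rewrite dp_invE in Ap'.
  have := hA _ _ Ap Ap'; rewrite /swp /= e => /(_ erefl) ep.
  have h1 : dpP p' = dpP p by rewrite ep.
  have h2 : dpy p' = dpx p by rewrite ep.
  by exists p => //; rewrite h1 h2 setUid.
move=> [p Ap ->]; exists p, (swp p); split => //=.
  by rewrite dp_invE /swp /= dpE.
by rewrite setUid.
Qed.

Lemma UN_tclass p0 : dpx p0 = dpy p0 -> UN (tclass p0).
Proof. by move=> e _ [v ->] /=; rewrite e. Qed.

Lemma UN_mul A B : UN A -> UN B -> UN (dp_mul A B).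
Proof.
by move=> hA hB _ [p [p' [Ap Bp' e ->]]] /=; rewrite hA // e hB.
Qed.

Lemma UN_inv A : UN A -> dp_inv A = A.
Proof.
move=> hA; apply/seteqP; split => q; rewrite dp_invE.
  by case: q => P x y h; have := hA _ h; rewrite /swp /= => e; subst.
by case: q => P x y h; have := hA _ h; rewrite /swp /= => e; subst.
Qed.

Lemma UN_comm A B : UN A -> UN B -> dp_mul A B = dp_mul B A.
Proof.
move=> hA hB; apply/seteqP; split => q.
  move=> [p [p' [Ap Bp' e ->]]]; have e1 := hA _ Ap; have e2 := hB _ Bp'.
  exists p', p; split => //; first by rewrite -e2 -e -e1.
  by congr DP; [exact: setUC|rewrite e1 e|rewrite -e2 -e].
move=> [p [p' [Ap Bp' e ->]]]; have e1 := hB _ Ap; have e2 := hA _ Bp'.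
exists p', p; split => //; first by rewrite -e2 -e -e1.
by congr DP; [exact: setUC|rewrite e1 e|rewrite -e2 -e].
Qed.

Lemma absorb U A : UN U -> TR U -> UN A -> TC A -> UQ A -> dle A U -> dp_mul U A = U.
Proof.
move=> uU rU uA cA qA hAU; apply/seteqP; split => q.
  move=> [p [p' [Up Ap' e ->]]].
  have [r [Ar s ex _]] := dle_at hAU cA rU Up.
  have := qA _ _ Ar Ap'; rewrite ex (uU _ Up) e => /(_ erefl) er; subst r.
  by rewrite (setU_sub s) -(uA _ Ap') -e -{1}(uU _ Up) dpE.
move=> Uq; have [r [Ar s ex ey]] := dle_at hAU cA rU Uq.
exists q, r; split => //; first by rewrite ex uU.
by rewrite (setU_sub s) -(uA _ Ar) ex {2}(uU _ Uq) dpE.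
Qed.

Lemma mul_sub V D E pv pd : UN V -> TR V -> TC D -> TR D -> UQ D -> TC E -> UQ E ->
  dle E D -> V pv -> D pd -> dpx pv = dpx pd -> dpP pd `<=` dpP pv ->
  dp_mul V E = dp_mul V D.
Proof.
move=> uV rV cD rD qD cE qE hED Vpv Dpd exx sub.
have key : forall p1, V p1 -> exists p2, [/\ D p2, dpx p2 = dpx p1 & dpP p2 `<=` dpP p1].
  move=> p1 Vp1; have [s ->] := rV _ _ Vpv Vp1.
  exists (dptr s pd); split; [exact: cD| by rewrite /= exx| exact: ptrS].
apply/seteqP; split => q.
  move=> [p [p' [Vp Ep' e ->]]].
  have [p2 [Dp2 ex2 s2]] := key _ Vp.
  have [p3 [Ep3 s3 ex3 ey3]] := dle_at hED cE rD Dp2.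
  have := qE _ _ Ep3 Ep'; rewrite ex3 ex2 (uV _ Vp) e => /(_ erefl) e3; subst p3.
  exists p, p2; split => //; first by rewrite ex2 uV.
  by rewrite ey3 ex3 ex2 (setU_sub s2) (setU_sub (subset_trans s3 s2)).
move=> [p [p' [Vp Dp' e ->]]].
have [p2 [Dp2 ex2 s2]] := key _ Vp.
have := qD _ _ Dp2 Dp'; rewrite ex2 (uV _ Vp) e => /(_ erefl) e2; subst p2.
have [p3 [Ep3 s3 ex3 ey3]] := dle_at hED cE rD Dp'.
exists p, p3; split => //; first by rewrite ex3 ex2 uV.
by rewrite ey3 ex2 (setU_sub s2) (setU_sub (subset_trans s3 s2)).
Qed.

End Cls.



Section Lim.
Variables (R : realType) (d : nat).
Local Notation pt := ('rV[R]_d).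
Local Notation tile := (tile R d).
Local Notation dpp := (dpp R d).
Local Notation ptil := (ptil R d).
Implicit Types (t : tile) (P Q : set tile) (p q : dpp) (v a b : pt) (A B C V D E : set dpp)
  (w : ptil).

Lemma finite_unif (X : Type) (F : set X) (Pr : X -> R -> Prop) :
  finite_set F -> (forall x r r', r <= r' -> Pr x r -> Pr x r') ->
  (forall x, F x -> exists r, Pr x r) -> exists r, 0 <= r /\ forall x, F x -> Pr x r.
Proof.
elim/Pchoice: X => X in F Pr *; move=> /finite_seqP [s ->] mono.
elim: s => [|x s ih] h; first by exists 0; split.
have [r1 [r10 h1]] : exists r, 0 <= r /\ forall y, [set` s] y -> Pr y r.
  by apply: ih => y ys; apply: h; rewrite /= inE ys orbT.
have [r2 h2] := h x (mem_head _ _).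
exists (Num.max r1 r2); split; first by rewrite le_max r10.
move=> y; rewrite /= inE => /orP[/eqP ->|bs].
  by apply: mono h2; rewrite le_max lexx orbT.
by apply: mono (h1 _ bs); rewrite le_max lexx.
Qed.

Lemma rad_cover A (r : R) : 0 <= r -> r < rad A ->
  exists p, A p /\ covers (dpP p) (region (dpx p) r).
Proof.
move=> r0 rr.
have [hs|nhs] := pselect (has_sup [set r | 0 <= r /\ exists2 p, A p & covers (dpP p) (region (dpx p) r)]).
  have := sup_adherent (eps := rad A - r) _ hs; rewrite subr_gt0 => /(_ rr).
  move=> [e [e0 [p Ap cp]]]; rewrite /rad opprB addrC subrK => re.
  exists p; split => //; apply: coversS cp => //; exact: regionS (ltW re).
by move: rr; rewrite /rad sup_out // => rr; move: (lt_le_trans rr r0); rewrite ltxx.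
Qed.


Lemma placed_covers A w p (r : R) : TR A -> placed A w p -> 0 <= r -> r < rad A ->
  covers (dpP p) (region (ps w) r).
Proof.
move=> rA [Ap _ ex] r0 rr; have [p' [Ap' cp']] := rad_cover r0 rr.
have [v ev] := rA _ _ Ap' Ap; subst p; rewrite -ex /dptr /= region_tr.
exact: covers_tr.
Qed.

Lemma dom_fin w F : is_tiling (pS w) -> pS w (ps w) -> finite_set F -> F `<=` pS w ->
  exists r, 0 <= r /\ forall Q, Q `<=` pS w -> covers Q (region (ps w) r) -> F `<=` Q.
Proof.
move=> tw sw fF Fw.
have [[p0 hp0] _ _ _] := til_props tw sw.
pose Pr := fun t (r : R) => exists z, (tpts t)° z /\ region (ps w) r z.
have mono : forall t r r', r <= r' -> Pr t r -> Pr t r'.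
  by move=> t r r' rr [z [h1 h2]]; exists z; split => //; exact: regionS rr _ h2.
have hex : forall t, F t -> exists r, Pr t r.
  move=> t Ft; have [z hz] := til_int tw (Fw t Ft).
  by exists (enorm (z - p0) + 1), z; split => //; exact: region_in.
have [r [r0 hr]] := finite_unif fF mono hex.
exists r; split => // Q Qw cQ t Ft.
have [z [hz rz]] := hr t Ft.
exact: (til_K3 tw Qw cQ (Fw t Ft) hz rz).
Qed.

Definition limseq (U : nat -> set dpp) w := [/\ is_tiling (pS w), pS w (ps w),
  (forall n, occurs_at (U n) w), (forall n, TR (U n)) &
  (forall M : R, exists n0, forall n, (n0 <= n)%N -> M <= rad (U n))].

Lemma limseq_dom U w F : limseq U w -> finite_set F -> F `<=` pS w ->
  exists n0, forall n, (n0 <= n)%N -> forall q, placed (U n) w q -> F `<=` dpP q.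
Proof.
move=> [tw sw oc rU gr] fF Fw.
have [r [r0 hr]] := dom_fin tw sw fF Fw.
have [n0 hn0] := gr (r + 1); exists n0 => n nn0 q pq.
have [_ qw _] := pq.
apply: hr qw _; apply: placed_covers (rU n) pq r0 _.
by apply: lt_le_trans (hn0 _ nn0); rewrite ltrDl.
Qed.

Lemma limseq_dle U w A p : limseq U w -> (forall n, UN (U n)) -> UN A ->
  placed A w p -> finite_set (dpP p) -> exists n0, forall n, (n0 <= n)%N -> dle A (U n).
Proof.
move=> ls uU uA pp fp; have [Ap pw ex] := pp.
have [n0 hn0] := limseq_dom ls fp pw.
exists n0 => n nn0; have [_ _ oc _ _] := ls.
have /occursP [q pq] := oc n; have [Uq _ exq] := pq.
exists p, q; split => //.
- exact: (hn0 n nn0 q pq).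
- by rewrite ex exq.
- by rewrite -(uA _ Ap) -(uU _ _ Uq) ex exq.
Qed.

Lemma ev2 (P1 P2 : nat -> Prop) : (exists n0, forall n, (n0 <= n)%N -> P1 n) ->
  (exists n0, forall n, (n0 <= n)%N -> P2 n) -> exists n0, forall n, (n0 <= n)%N -> P1 n /\ P2 n.
Proof.
move=> [a ha] [b hb]; exists (maxn a b) => n; rewrite geq_max => /andP[h1 h2].
by split; [exact: ha|exact: hb].
Qed.

Lemma pteq_refl w : pteq w w.
Proof. by exists 0; rewrite ptr0 ttr0. Qed.

Lemma pteq_sym w1 w2 : pteq w1 w2 -> pteq w2 w1.
Proof. by move=> [v [e1 e2]]; exists (- v); rewrite e1 e2 ptrK ttrK. Qed.

Lemma pteq_trans w1 w2 w3 : pteq w1 w2 -> pteq w2 w3 -> pteq w1 w3.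
Proof. by move=> [v [e1 e2]] [a [e3 e4]]; exists (v + a); rewrite e3 e4 e1 e2 ptrD ttrD. Qed.

Lemma occurs_pteq A w1 w2 : TC A -> pteq w1 w2 -> occurs_at A w1 -> occurs_at A w2.
Proof.
move=> cA [v [e1 e2]] /occursP [p [Ap h1 h2]].
apply/occursP; exists (dptr v p); split; first exact: cA.
- by rewrite e1; exact: ptrS.
- by rewrite e2 /= h2.
Qed.

Lemma limseq_pteq U w1 w2 : limseq U w1 -> limseq U w2 -> pteq w1 w2.
Proof.
move=> ls1 ls2; have [t1 s1 o1 rU _] := ls1; have [t2 s2 o2 _ _] := ls2.
have /occursP [p1 [Ap1 _ ex1]] := o1 0%N; have /occursP [p2 [Ap2 _ ex2]] := o2 0%N.
have [v ev] := rU _ _ _ Ap1 Ap2.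
have esv : ps w2 = ttr v (ps w1) by rewrite -ex2 -ex1 ev.
have bw1 := til_bnd t1 s1.
have key : forall n q1 q2, placed (U n) w1 q1 -> placed (U n) w2 q2 -> dpP q2 = ptr v (dpP q1).
  move=> n q1 q2 [h1 _ x1] [h2 _ x2]; have [a ea] := rU _ _ _ h1 h2.
  have : ttr a (ps w1) = ttr v (ps w1) by rewrite -esv -x2 ea /= x1.
  by move=> /(ttr_inj_v bw1) ea'; rewrite ea ea'.
exists v; split => //; apply/seteqP; split => t.
  move=> ht; have sub : [set t] `<=` pS w2 by move=> s ->.
  have [n0 hn0] := limseq_dom ls2 (finite_set1 t) sub.
  have /occursP [q2 pq2] := o2 n0; have /occursP [q1 pq1] := o1 n0.
  have := hn0 n0 (leqnn _) q2 pq2 t erefl; rewrite (key _ _ _ pq1 pq2).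
  by apply: ptrS; case: pq1.
move=> [u1 hu1 <-]; have sub : [set u1] `<=` pS w1 by move=> s ->.
have [n0 hn0] := limseq_dom ls1 (finite_set1 u1) sub.
have /occursP [q2 pq2] := o2 n0; have /occursP [q1 pq1] := o1 n0.
have h1 := hn0 n0 (leqnn _) q1 pq1 u1 erefl.
have [_ sub2 _] := pq2; apply: sub2; rewrite (key _ _ _ pq1 pq2); exact/ptrE.
Qed.


Lemma MII_GC (T : set tile) c : is_tiling T -> MII T c -> GC c.
Proof.
move=> tT [p0 [_ hx hy sT] ->]; exists p0; split => //.
by split => //; [exact: (til_bnd tT (sT _ hx))|exact: (til_bnd tT (sT _ hy))].
Qed.

Lemma MII_fin (T : set tile) c p : MII T c -> c p -> finite_set (dpP p).
Proof. by move=> [p0 [f _ _ _] ->] [v ->]; exact: ptr_finite. Qed.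

Lemma unit_UN (T : set tile) u : is_unit T u -> UN u.
Proof.
move=> [[p0 _ ->] [p [a ->] /= e]]; apply: UN_tclass.
exact: (ttr_inj e).
Qed.

Lemma gcl_eq (T : set tile) (us : nat -> set dpp) w w' (c c' vv : set dpp) : is_tiling T -> limseq us w ->
  (forall n, is_unit T (us n)) -> pteq w w' -> is_unit T vv -> occurs_at vv w ->
  dp_mul vv c = dp_mul vv c' -> gcl T w c = gcl T w' c'.
Proof.
move=> tT ls uus ww' uvv ovv e.
have GCu : forall u, is_unit T u -> GC u by move=> u [h _]; exact: MII_GC h.
have UNus : forall n, UN (us n) by move=> n; exact: unit_UN (uus n).
have big : forall u, is_unit T u -> occurs_at u w -> exists n,
    [/\ dp_mul (us n) u = us n, dp_mul (us n) vv = us n & occurs_at (us n) w].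
  move=> u uu ou.
  have /occursP [p pp] := ou; have /occursP [p' pp'] := ovv.
  have [Ap _ _] := pp; have [Ap' _ _] := pp'.
  have [n0 hn0] := ev2 (limseq_dle ls UNus (unit_UN uu) pp (MII_fin (proj1 uu) Ap))
     (limseq_dle ls UNus (unit_UN uvv) pp' (MII_fin (proj1 uvv) Ap')).
  have [h1 h2] := hn0 n0 (leqnn _).
  have [_ _ oc rU _] := ls.
  exists n0; split => //.
    apply: absorb => //; [exact: unit_UN uu|exact: GC_TC (GCu _ uu)|exact: GC_UQ (GCu _ uu)].
  apply: absorb => //; [exact: unit_UN uvv|exact: GC_TC (GCu _ uvv)|exact: GC_UQ (GCu _ uvv)].
apply/seteqP; split => -[w2 c2] [/= hw2 mc2 oc2 [u [uu ou e2]]].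
  have [n [a1 a2 o]] := big u uu ou.
  split => //=; first exact: pteq_trans (pteq_sym ww') hw2.
  exists (us n); split => //.
    by apply: occurs_pteq ww' o; exact: GC_TC (GCu _ (uus n)).
  by rewrite -a2 dp_mulA -e -dp_mulA a2 -a1 dp_mulA e2 -dp_mulA a1.
have ou' : occurs_at u w by apply: occurs_pteq (pteq_sym ww') ou; exact: GC_TC (GCu _ uu).
have [n [a1 a2 o]] := big u uu ou'.
split => //=; first exact: pteq_trans ww' hw2.
exists (us n); split => //.
by rewrite -a2 dp_mulA e -dp_mulA a2 -a1 dp_mulA e2 -dp_mulA a1.
Qed.

End Lim.



Section Hull.
Variables (R : realType) (d : nat).
Local Notation pt := ('rV[R]_d).
Local Notation tile := (tile R d).
Local Notation dpp := (dpp R d).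
Local Notation ptil := (ptil R d).
Implicit Types (t : tile) (P Q : set tile) (p q : dpp) (v a b : pt) (A B C V D E : set dpp)
  (w : ptil).

Definition Mset (S : set tile) (x : tile) (r : R) : set tile :=
  [set t | S t /\ exists z, (tpts t)° z /\ region x r z].

Lemma isMr_M S x r : is_tiling S -> is_Mr (PT S x) r (Mset S x r).
Proof.
move=> tS; split => /=.
- by move=> t [].
- move=> y ry; have [t [St ty]] := til_cover tS y.
  exists t => //; split => //.
  have [_ _ _ e] := til_props tS St.
  have : closure (tpts t)° y by rewrite e.
  move=> /(_ (region x r)); rewrite setIC.
  have hn : nbhs y (region x r).
    have ho : open (region x r) by exact: region_open.
    by move: ho; rewrite openE => /(_ y ry).
  by move=> /(_ hn) [z [h1 h2]]; exists z.
- move=> P' P'S cP' t [St [z [hz rz]]].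
  exact: (til_K3 tS P'S cP' St hz rz).
Qed.

Lemma M_tr T S x x0 v P Q (r : R) : is_tiling T -> is_tiling S ->
  Q `<=` S -> covers Q (region x r) -> Q = ptr v P -> P `<=` T -> x = ttr v x0 ->
  Mset S x r = ptr v (Mset T x0 r).
Proof.
move=> tT tS QS cQ eQ PT ex; apply/seteqP; split => t.
  move=> [St [z [hz rz]]].
  have Qt := til_K3 tS QS cQ St hz rz.
  move: Qt; rewrite eQ => -[t0 Pt0 et]; subst t.
  exists t0 => //; split; first exact: PT.
  move: hz rz; rewrite ttr_interior ex region_tr => -[z0 hz0 <-] [z1 rz1].
  by move/addIr => e; subst z1; exists z0.
move=> [t0 [Tt0 [z0 [hz0 rz0]]] <-].
have rz : region x r (z0 + v) by rewrite ex region_tr; exists z0.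
have [s Qs zs] := cQ _ rz.
have Qs' := Qs; rewrite eQ in Qs'; case: Qs' => s0 Ps0 es; subst s.
have zs0 : tpts s0 z0 by move: zs => /= -[y hy /addIr <-].
have e0 := til_K1 tT Tt0 (PT _ Ps0) hz0 zs0; subst s0.
split; first exact: QS.
by exists (z0 + v); split; [rewrite ttr_interior; exists z0|].
Qed.

Lemma hull_crit T w : is_tiling T -> is_tiling (pS w) -> pS w (ps w) ->
  (forall r : R, exists Q v P x0, [/\ Q `<=` pS w, covers Q (region (ps w) r), Q = ptr v P,
     P `<=` T & [/\ T x0 & ps w = ttr v x0]]) -> hull T w.
Proof.
move=> tT tS sx h; split => // r.
have [Q [v [P [x0 [QS cQ eQ PT [Tx0 ex]]]]]] := h r.
exists x0; split => //.
exists (Mset (pS w) (ps w) r), (Mset T x0 r); split.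
- exact: isMr_M.
- exact: isMr_M.
exists (- v); split; first by rewrite (M_tr tT tS QS cQ eQ PT ex) ptrK.
by rewrite /= ex ttrK.
Qed.


Lemma tiling_trans_props T t v : is_tiling T -> T t ->
  [/\ tpts (ttr v t) !=set0, (exists M : R, forall x, tpts (ttr v t) x -> enorm x <= M),
   closed (tpts (ttr v t)) & closure (interior (tpts (ttr v t))) = tpts (ttr v t)].
Proof.
move=> tT Tt; have [h1 h2 h3 h4] := til_props tT Tt.
have [[y hy] hb] := bnd_tr v (conj h1 h2).
split => //; first by exists y.
- exact: closed_tr.
- by rewrite ttr_interior /= closure_tr h4.
Qed.

Lemma int_tr2 t t' v (z : pt) : (tpts (ttr v t))° z -> (tpts (ttr v t'))° z ->
  exists z0, [/\ z = z0 + v, (tpts t)° z0 & (tpts t')° z0].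
Proof.
rewrite !ttr_interior => -[z0 h0 <-] [z1 h1 /addIr e]; subst z1.
by exists z0.
Qed.

Lemma lim_construct T (Us : nat -> set dpp) : is_tiling T -> (forall n, is_unit T (Us n)) ->
  (forall M : R, exists n0, forall n, (n0 <= n)%N -> M <= rad (Us n)) ->
  (forall n, exists m0, forall m, (m0 <= m)%N -> dle (Us n) (Us m)) ->
  exists w, [/\ hull T w, is_lim Us w, limseq Us w &
     forall k, composable T (uprod Us k) (Us k.+1)].
Proof.
move=> tT uU gr hc.
have GCn n : GC (Us n) by exact: MII_GC tT (proj1 (uU n)).
have UNn n : UN (Us n) by exact: unit_UN (uU n).
have [B0 UB0] := GC_ne (GCn 0%N).
pose b0 := dpx B0.
have ex_rep : forall n, exists q, Us n q /\ dpx q = b0.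
  move=> n; have [a ha] := hc 0%N; have [b hb] := hc n.
  pose m := maxn a b.
  have [Bm UBm] := GC_ne (GCn m).
  have [p [Up _ exp _]] := dle_at (ha m (leq_maxl _ _)) (GC_TC (GCn 0%N)) (GC_TR (GCn m)) UBm.
  have [s es] := GC_TR (GCn 0%N) Up UB0.
  have Um' : Us m (dptr s Bm) by apply: GC_TC.
  have [q [Uq _ exq _]] := dle_at (hb m (leq_maxr _ _)) (GC_TC (GCn n)) (GC_TR (GCn m)) Um'.
  by exists q; split => //; rewrite exq /b0 es /= exp.
pose qf n := projT1 (cid (ex_rep n)).
have hq n : Us n (qf n) /\ dpx (qf n) = b0 := projT2 (cid (ex_rep n)).
have uq n q : Us n q -> dpx q = b0 -> q = qf n.
  by move=> Uq eq; apply: (GC_UQ (GCn n)) Uq (proj1 (hq n)) _; rewrite eq (proj2 (hq n)).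
have hyq n : dpy (qf n) = b0 by rewrite -(UNn n _ (proj1 (hq n))) (proj2 (hq n)).
have incl n : exists m0, forall m, (m0 <= m)%N -> dpP (qf n) `<=` dpP (qf m).
  have [m0 hm0] := hc n; exists m0 => m mm0.
  have [q' [Uq' s' ex' _]] := dle_at (hm0 m mm0) (GC_TC (GCn n)) (GC_TR (GCn m)) (proj1 (hq m)).
  by rewrite -(uq n q' Uq') // ex' (proj2 (hq m)).
have inclk k : exists m0, forall m, (m0 <= m)%N -> forall i, (i <= k)%N -> dpP (qf i) `<=` dpP (qf m).
  elim: k => [|k [a ha]].
    have [m0 hm0] := incl 0%N; exists m0 => m mm0 i; rewrite leqn0 => /eqP ->; exact: hm0.
  have [b hb] := incl k.+1; exists (maxn a b) => m; rewrite geq_max => /andP[h1 h2] i.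
  rewrite leq_eqVlt => /orP[/eqP ->|]; first exact: hb.
  by rewrite ltnS; apply: ha.
have rep n : exists v p0, qf n = dptr v p0 /\ Tpat T p0.
  have [[p0 tp0 e] _] := uU n; have := proj1 (hq n); rewrite e => -[v ev].
  by exists v, p0.
pose S := [set t | exists n, dpP (qf n) t].
have single t : S t -> exists v t0, T t0 /\ t = ttr v t0.
  move=> [n hn]; have [v [p0 [e [_ _ _ sT]]]] := rep n.
  by move: hn; rewrite e => -[t0 h0 <-]; exists v, t0; split => //; exact: sT.
have pair t t' : S t -> S t' -> exists v t0 t0', [/\ T t0, T t0', t = ttr v t0 & t' = ttr v t0'].
  move=> [a ha] [b hb]; have [ma hma] := incl a; have [mb hmb] := incl b.
  pose m := maxn ma mb.
  have hta := hma m (leq_maxl _ _) _ ha; have htb := hmb m (leq_maxr _ _) _ hb.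
  have [v [p0 [e [_ _ _ sT]]]] := rep m.
  move: hta htb; rewrite e => -[t0 h0 <-] [t1 h1 <-].
  by exists v, t0, t1; split => //; exact: sT.
have [p0b b0P] : exists y : pt, tpts b0 y.
  have [v [p0 [e [_ hx _ sT]]]] := rep 0%N.
  have [[y hy] _ _ _] := til_props tT (sT _ hx).
  by exists (y + v); rewrite -(proj2 (hq 0%N)) e /=; exists y.
pose w := PT S b0.
have Sb0 : S b0.
  exists 0%N; have [h _] := GC_mem (GCn 0%N) (proj1 (hq 0%N)).
  by rewrite -(proj2 (hq 0%N)).
have pl n : placed (Us n) w (qf n).
  by split; [exact: (proj1 (hq n))|move=> t ht; exists n|exact: (proj2 (hq n))].
have tS : is_tiling S.
  split.
  - have -> : S = \bigcup_(n in setT) dpP (qf n) by apply/seteqP; split => t [n]; exists n.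
    apply: bigcup_countable; first exact: countableP.
    move=> n _; apply: finite_set_countable; exact: MII_fin (proj1 (uU n)) (proj1 (hq n)).
  - by move=> t /single [v [t0 [Tt0 ->]]]; exact: (tiling_trans_props v tT Tt0).
  - have [_ _ [nd hnd] _ _] := tT; exists nd => t /single [v [t0 [Tt0 ->]]] /=; exact: hnd.
  - split.
      move=> y; pose r := enorm (y - p0b) + 1.
      have [n0 hn0] := gr (r + 1).
      have hc0 := placed_covers (GC_TR (GCn n0)) (pl n0) (_ : 0 <= r) (_ : r < rad (Us n0)).
      have [||t ht ty] := hc0 _ _ y (region_in y b0P).
      + by rewrite /r; have := enorm_ge0 (y - p0b); lra.
      + by apply: lt_le_trans (hn0 _ (leqnn _)); rewrite ltrDl.
      by exists t; split => //; exists n0.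
    move=> t t' St St' ne; have [v [t0 [t1 [T0 T1 e0 e1]]]] := pair _ _ St St'; subst t t'.
    have ne' : t0 <> t1 by move=> e; apply: ne; rewrite e.
    apply/seteqP; split => // z [h1 h2].
    have [z0 [_ i0 i1]] := int_tr2 h1 h2.
    have := til_overlap tT T0 T1 ne'; move=> /seteqP [/(_ z0 (conj i0 i1))] //.
  - have [_ _ _ _ [nf [f hf]]] := tT; exists nf, f.
    move=> t t' St St' [z [z1 z2]]; have [v [t0 [t1 [T0 T1 e0 e1]]]] := pair _ _ St St'; subst t t'.
    move: z1 z2 => /= [y0 h0 <-] [y1 h1 /addIr e]; subst y1.
    have [i [ilt [v1 [e0 e1]]]] := hf _ _ T0 T1 (ex_intro _ y0 (conj h0 h1)).
    by exists i; split => //; exists (v1 + v); rewrite e0 e1 !ttrD.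
have lsw : limseq Us w.
  split => //; [move=> n; apply/occursP; exists (qf n); exact: pl|move=> n; exact: GC_TR].
exists w; split => //.
- apply: hull_crit => // r.
  have [n0 hn0] := gr (Num.max r 0 + 1).
  have [v [p0 [e [_ hx _ sT]]]] := rep n0.
  exists (dpP (qf n0)), v, (dpP p0), (dpx p0); split.
  + by move=> t ht; exists n0.
  + apply: coversS (placed_covers (GC_TR (GCn n0)) (pl n0) (_ : 0 <= Num.max r 0) _) => //.
    * by apply: regionS; rewrite le_max lexx.
    * by rewrite le_max lexx orbT.
    * by apply: lt_le_trans (hn0 _ (leqnn _)); rewrite ltrDl.
  + by rewrite e.
  + exact: sT.
  + by split; [exact: sT|rewrite /= -(proj2 (hq n0)) e].
- by split => //; move=> n; apply/occursP; exists (qf n); exact: pl.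
move=> k.
pose cup k := [set t | exists2 i, (i <= k)%N & dpP (qf i) t].
have mem k' : uprod Us k' (DP (cup k') b0 b0).
  elim: k' => [|k' ih] /=.
    have -> : cup 0%N = dpP (qf 0%N).
      by apply/seteqP; split => t; [case=> i; rewrite leqn0 => /eqP ->|exists 0%N].
    have e0 : DP (dpP (qf 0%N)) b0 b0 = qf 0%N.
      by rewrite -[X in DP _ X _](proj2 (hq 0%N)) -(hyq 0%N) dpE.
    by rewrite e0; exact: (proj1 (hq 0%N)).
  exists (DP (cup k') b0 b0), (qf k'.+1); split => //.
  - exact: (proj1 (hq _)).
  - by rewrite (proj2 (hq _)).
  - rewrite hyq; congr DP; apply/seteqP; split => t.
      case=> i; rewrite leq_eqVlt => /orP[/eqP ->|]; first by right.
      by rewrite ltnS => ik ht; left; exists i.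
    by case=> [[i ik ht]|ht]; [exists i => //; exact: leqW|exists k'.+1].
have [m0 hm0] := inclk k.+1.
have [v [p0 [e [fp0 hx hy sT]]]] := rep m0.
have ep0 : dpx p0 = dpy p0.
  by apply: (@ttr_inj _ _ v); move: (hyq m0) (proj2 (hq m0)); rewrite e /= => -> ->.
have ep : DP (dpP p0) (dpx p0) (dpx p0) = p0 by rewrite {2}ep0 dpE.
have Tq : tclass p0 (qf m0) by rewrite e; exists v.
exists (dpP p0), (dpx p0), (dpx p0), (dpx p0); split => //; rewrite ep.
- exists (DP (cup k) b0 b0), (qf m0); split => //.
  + move=> t [i ik ht]; exact: (hm0 m0 (leqnn _) i (leqW ik)).
  + by rewrite (proj2 (hq _)).
- exists (qf k.+1), (qf m0); split => //.
  + exact: (proj1 (hq _)).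
  + exact: (hm0 m0 (leqnn _) k.+1 (leqnn _)).
  + by rewrite !(proj2 (hq _)).
  + by rewrite !hyq.
Qed.

End Hull.

Section HullLim.
Variables (R : realType) (d : nat).
Local Notation pt := ('rV[R]_d).
Local Notation tile := (tile R d).
Local Notation dpp := (dpp R d).
Local Notation ptil := (ptil R d).

Lemma limseq_hull (T : set tile) (us : nat -> set dpp) (w : ptil) : is_tiling T ->
  limseq us w -> (forall n, MII T (us n)) -> hull T w.
Proof.
move=> tT ls hM; have [tw sw oc rU gr] := ls.
apply: hull_crit => // r.
have [n0 hn0] := gr (Num.max r 0 + 1).
have /occursP [q pq] := oc n0; have [Uq qw qx] := pq.
have [p0 [fp0 hx hy sT] e] := hM n0.
move: (Uq); rewrite e => -[v ev].
exists (dpP q), v, (dpP p0), (dpx p0); split => //.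
- apply: coversS (placed_covers (rU n0) pq (_ : 0 <= Num.max r 0) _) => //.
  + by apply: regionS; rewrite le_max lexx.
  + by rewrite le_max lexx orbT.
  + by apply: lt_le_trans (hn0 _ (leqnn _)); rewrite ltrDl.
- by rewrite ev.
- by split; [exact: sT|rewrite -qx ev].
Qed.

End HullLim.



Section Gen.
Variables (R : realType) (d : nat).
Local Notation pt := ('rV[R]_d).
Local Notation tile := (tile R d).
Local Notation dpp := (dpp R d).
Local Notation ptil := (ptil R d).
Implicit Types (t : tile) (P Q : set tile) (p q : dpp) (v a b : pt) (A B C V D E : set dpp)
  (w : ptil).

Lemma CC (T : set tile) (us : nat -> set dpp) w A B p p' : limseq us w -> (forall n, MII T (us n)) ->
  TC A -> TC B -> A p -> B p' -> dpP p `<=` pS w -> dpP p' `<=` pS w ->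
  finite_set (dpP p) -> finite_set (dpP p') ->
  dpP p (dpx p) -> dpP p (dpy p) -> dpP p' (dpy p') -> dpy p = dpx p' -> composable T A B.
Proof.
move=> ls hM cA cB Ap Bp' pw p'w fp fp' hx hy hy' e.
have fU : finite_set (dpP p `|` dpP p') by rewrite finite_setU; split.
have Uw : dpP p `|` dpP p' `<=` pS w by move=> t [/pw|/p'w].
have [n0 hn0] := limseq_dom ls fU Uw.
have [_ _ oc _ _] := ls.
have /occursP [q pq] := oc n0; have sub := hn0 n0 (leqnn _) q pq.
have [Uq _ _] := pq.
have [p0 [fp0 _ _ sT] ep0] := hM n0.
move: Uq; rewrite ep0 => -[v ev].
have sub' : forall t, (dpP p `|` dpP p') t -> dpP p0 (ttr (- v) t).
  by move=> t /sub; rewrite ev /= ptrE'.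
exists (dpP p0), (ttr (- v) (dpx p)), (ttr (- v) (dpy p)), (ttr (- v) (dpy p')); split.
- by split => //=; apply: sub'; [left|right].
- by apply: sub'; left.
- exists (dptr (- v) p), (DP (dpP p0) (ttr (- v) (dpx p)) (ttr (- v) (dpy p))); split => //.
  + exact: cA.
  + exact: tclass_self.
  + move=> t /= /ptrE' h; have := sub' _ (or_introl h).
    by rewrite ttrD opprK subrr ttr0.
- exists (dptr (- v) p'), (DP (dpP p0) (ttr (- v) (dpy p)) (ttr (- v) (dpy p'))); split => //.
  + exact: cB.
  + exact: tclass_self.
  + move=> t /= /ptrE' h; have := sub' _ (or_intror h).
    by rewrite ttrD opprK subrr ttr0.
  + by rewrite /= e.
Qed.

Lemma ev_fin (Pr : nat -> nat -> Prop) n :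
  (forall i, (i < n)%N -> exists m0, forall m, (m0 <= m)%N -> Pr i m) ->
  exists m0, forall m, (m0 <= m)%N -> forall i, (i < n)%N -> Pr i m.
Proof.
elim: n => [|n ih] h; first by exists 0%N.
have [a ha] := ih (fun i lt => h i (ltnW lt)).
have [b hb] := h n (ltnSn _).
exists (maxn a b) => m; rewrite geq_max => /andP[h1 h2] i.
rewrite ltnS leq_eqVlt => /orP[/eqP ->|lt]; [exact: hb|exact: ha].
Qed.

Lemma vec_half (a : pt) : a + a = 0 -> a = 0.
Proof.
move=> e; apply/rowP => i; have := congr1 (fun m : pt => m 0 i) e.
rewrite !mxE => h; lra.
Qed.

Lemma placed_mul A B w p p' : placed A w p -> B p' -> dpx p' = dpy p -> dpP p' `<=` pS w ->
  placed (dp_mul A B) w (DP (dpP p `|` dpP p') (dpx p) (dpy p')).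
Proof.
move=> [Ap pw px] Bp' e p'w; split => //=.
- by exists p, p'; split.
- by move=> t [/pw|/p'w].
Qed.


Lemma UN_Lu A : GC A -> UN (Lu A).
Proof. by move=> gA q /(LuE _ (GC_UQy gA)) [p _ ->]. Qed.

Lemma TC_Lu A : GC A -> TC (Lu A).
Proof. by move=> gA; exact: TC_mul (GC_TC gA) (TC_inv (GC_TC gA)). Qed.

End Gen.

Section Main.
Variables (R : realType) (d d' : nat).
Variables (T : set (tile R d)) (T' : set (tile R d')).
Variables (N : set (set (dpp R d))) (phih : set (dpp R d) -> set (dpp R d')).
Hypothesis tT : is_tiling T.
Hypothesis tT' : is_tiling T'.
Hypothesis sag : sub_almost_groupoid T N.
Hypothesis appr : approximating T N.
Hypothesis hM : forall c, N c -> MII T' (phih c).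
Hypothesis hcomp : forall c c', N c -> N c' -> composable T c c' ->
     composable T' (phih c) (phih c').
Hypothesis hinv : forall c, N c -> phih (dp_inv c) = dp_inv (phih c).
Hypothesis hmul : forall c c', N c -> N c' -> composable T c c' ->
     dle (dp_mul (phih c) (phih c')) (phih (dp_mul c c')).
Hypothesis hrad : exists2 t : R, 0 < t & exists K : R, forall u, N u -> is_unit T u ->
     `|rad (phih u) - t * rad u| <= K.

Lemma NM c : N c -> MII T c. Proof. by case: sag => h _ _; exact: h. Qed.
Lemma Ninv c : N c -> N (dp_inv c). Proof. by case: sag => _ h _; exact: h. Qed.
Lemma Nmul c c' : N c -> N c' -> composable T c c' -> N (dp_mul c c').
Proof. by case: sag => _ _ h; exact: h. Qed.
Lemma NGC c : N c -> GC c. Proof. by move=> /NM; exact: MII_GC. Qed.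
Lemma phGC c : N c -> GC (phih c). Proof. by move=> /hM; exact: MII_GC. Qed.

Lemma ph_unit u : N u -> is_unit T u -> is_unit T' (phih u).
Proof.
move=> Nu uu; split; first exact: hM.
have e : phih u = dp_inv (phih u) by rewrite -hinv // UN_inv //; exact: unit_UN uu.
have [p0 [e0 [bx by_ _ _]]] := phGC Nu.
exists p0; first by rewrite e0; exact: tclass_self.
have : phih u (swp p0) by rewrite e dp_invE /swp /= dpE e0; exact: tclass_self.
rewrite e0 => -[a]; rewrite /swp /dptr => -[_ ey ex].
have : ttr 0 (dpx p0) = ttr (a + a) (dpx p0) by rewrite ttr0 {1}ex ey ttrD.
move=> /(ttr_inj_v bx) /esym /vec_half a0.
by rewrite ey a0 ttr0.
Qed.

Lemma KL a b : N a -> N b -> is_unit T a -> is_unit T b -> dle a b -> dle (phih a) (phih b).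
Proof.
move=> Na Nb ua ub hab.
have [[p1 [fp1 hx1 hy1 sT1] e1] _] := ub.
have UNb := unit_UN ub; have UNa := unit_UN ua.
have b1 : b p1 by rewrite e1; exact: tclass_self.
have ex1 : dpx p1 = dpy p1 := UNb _ b1.
have [p [ap sp exp eyp]] := dle_at hab (GC_TC (NGC Na)) (GC_TR (NGC Nb)) b1.
have cba : composable T b a.
  exists (dpP p1), (dpx p1), (dpx p1), (dpx p1); split => //.
  - exists p1, (DP (dpP p1) (dpx p1) (dpx p1)).
    by split; [done|exact: tclass_self|done|done|by rewrite ex1].
  - exists p, (DP (dpP p1) (dpx p1) (dpx p1)).
    by split; [done|exact: tclass_self|done|done|by rewrite eyp ex1].
have eab : dp_mul b a = b.
  apply: absorb => //; [exact: GC_TR (NGC Nb)|exact: GC_TC (NGC Na)|exact: GC_UQ (NGC Na)].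
have := hmul Nb Na cba; rewrite eab.
move=> [_ [q [[p2 [p3 [b2 a3 e23 ->]]] bq sq ex ey]]].
exists p3, q; split => //.
- by move=> t ht; apply: sq; right.
- by rewrite -e23 -(unit_UN (ph_unit Nb ub) b2) -ex.
Qed.


Lemma LIM u w : approx_seq T u -> (forall n, N (u n)) -> is_lim u w ->
  [/\ limseq u w, hull T w, approx_seq T' (phih \o u),
      exists w', hull T' w' /\ is_lim (phih \o u) w' &
      forall w', is_lim (phih \o u) w' -> limseq (phih \o u) w'].
Proof.
move=> [uu ucomp ugr] Nu [tw sw oc].
have ls : limseq u w by split => // n; exact: GC_TR (NGC (Nu n)).
have uph n : is_unit T' (phih (u n)) by exact: ph_unit.
have grph : forall M : R, exists n0, forall n, (n0 <= n)%N -> M <= rad ((phih \o u) n).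
  have [t t0 [K hK]] := hrad.
  move=> M; have [n0 hn0] := ugr ((M + K) / t); exists n0 => n nn0 /=.
  have := hK _ (Nu n) (uu n); rewrite ler_norml => /andP[h1 _].
  have := hn0 n nn0; rewrite ler_pdivrMr // => h2.
  move: h1 h2; rewrite [rad (u n) * t]mulrC; lra.
have cons : forall n, exists m0, forall m, (m0 <= m)%N -> dle ((phih \o u) n) ((phih \o u) m).
  move=> n; have /occursP [p pp] := oc n; have [Up _ _] := pp.
  have [m0 hm0] := limseq_dle ls (fun m => unit_UN (uu m)) (unit_UN (uu n)) pp
     (MII_fin (NM (Nu n)) Up).
  by exists m0 => m mm0; apply: KL => //; exact: hm0.
have [w0 [hw0 lw0 lsw0 cw0]] := lim_construct tT' uph grph cons.
have apx : approx_seq T' (phih \o u) by split.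
split => //.
- exact: limseq_hull tT ls (fun n => NM (Nu n)).
- by exists w0.
move=> w' [tw' sw' ow']; split => // n; exact: GC_TR (phGC (Nu n)).
Qed.

Lemma KC (u : nat -> set (dpp R d)) w w' e : limseq u w -> (forall n, N (u n)) ->
  (forall n, is_unit T (u n)) -> limseq (phih \o u) w' -> N e -> is_unit T e ->
  occurs_at e w -> occurs_at (phih e) w'.
Proof.
move=> ls Nu uu ls' Ne ue /occursP [p pp]; have [Ap _ _] := pp.
have [n0 hn0] := limseq_dle ls (fun m => unit_UN (uu m)) (unit_UN ue) pp (MII_fin (NM Ne) Ap).
have h := KL Ne (Nu n0) ue (uu n0) (hn0 n0 (leqnn _)).
have [_ _ oc' _ _] := ls'.
exact: occurs_dle h (GC_TC (phGC Ne)) (GC_TR (phGC (Nu n0))) (oc' n0).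
Qed.

Lemma LPH u w w' c : limseq u w -> (forall n, N (u n)) -> (forall n, is_unit T (u n)) ->
  limseq (phih \o u) w' -> N c -> occurs_at (Lu c) w ->
  occurs_at (Lu (phih c)) w' /\ N (Lu c).
Proof.
move=> ls Nu uu ls' Nc oL.
have /occursL [p [cp pw px]] := oL.
have [hx hy] := GC_mem (NGC Nc) cp.
have ccc : composable T c (dp_inv c).
  apply: (CC ls (fun n => NM (Nu n)) (GC_TC (NGC Nc)) (TC_inv (GC_TC (NGC Nc))) cp
    (_ : dp_inv c (swp p))) => //.
  - by rewrite dp_invE /swp /= dpE.
  - exact: MII_fin (NM Nc) cp.
  - exact: MII_fin (NM Nc) cp.
have Ne : N (Lu c) by apply: Nmul => //; exact: Ninv.
split => //.
have ue : is_unit T (Lu c).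
  split; first exact: NM.
  exists (DP (dpP p `|` dpP p) (dpx p) (dpx p)) => //.
  by exists p, (swp p); split => //; rewrite dp_invE /swp /= dpE.
have oe := KC ls Nu uu ls' Ne ue oL.
have h := hmul Nc (Ninv Nc) ccc; rewrite hinv // in h.
apply: occurs_dle h _ _ oe.
- exact: TC_mul (GC_TC (phGC Nc)) (TC_inv (GC_TC (phGC Nc))).
- exact: GC_TR (phGC Ne).
Qed.

Lemma XN_of u w c : approx_seq T u -> (forall n, N (u n)) -> is_lim u w ->
  N c -> occurs_at (Lu c) w -> XN T N (w, c).
Proof.
move=> au Nu lu Nc oL; have [_ hw _ _ _] := LIM au Nu lu.
split => //; exists (dp_inv c); first exact: Ninv.
by split => //; rewrite /Ru dp_invK.
Qed.


Definition Good (g : set (ptil R d * set (dpp R d))) (g' : set (ptil R d' * set (dpp R d'))) :=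
  exists u w c w', [/\ approx_seq T u, (forall n, N (u n)), is_lim u w, N c & occurs_at (Lu c) w]
    /\ [/\ is_lim (phih \o u) w', g = gclN T N w c & g' = gcl T' w' (phih c)].



Lemma WD g g1 g2 : Good g g1 -> Good g g2 -> g1 = g2.
Proof.
move=> [u1 [w1 [c1 [w1' [[a1 N1 l1 Nc1 o1] [l1' eg1 ->]]]]]].
move=> [u2 [w2 [c2 [w2' [[a2 N2 l2 Nc2 o2] [l2' eg2 ->]]]]]].
have [ls1 _ _ _ lsp1] := LIM a1 N1 l1; have [ls2 _ _ _ lsp2] := LIM a2 N2 l2.
have ls1' := lsp1 _ l1'; have ls2' := lsp2 _ l2'.
have [uu1 _ _] := a1; have [uu2 _ _] := a2.
have m11 : gclN T N w1 c1 (w1, c1).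
  split; [exact: pteq_refl|exact: XN_of a1 N1 l1 Nc1 o1|].
  exists (u1 0%N); split => //; have [_ _ oc] := l1; exact: oc.
move: m11; rewrite -eg1 eg2 => -[/= pw21 _ [v [uv ov ev]]].
have pw12 := pteq_sym pw21.
have ls12' : limseq (phih \o u1) w2'.
  have [tw2' sw2' _ _ _] := ls2'; have [_ _ _ rU1' gr1'] := ls1'.
  split => // n; apply: (KC ls2 N2 uu2 ls2' (N1 n) (uu1 n)).
  have [_ _ oc1] := l1; apply: occurs_pteq pw12 (oc1 n); exact: GC_TC (NGC (N1 n)).
have p12' := limseq_pteq ls1' ls12'.
(* a big unit of u2 absorbing v *)
have GCv : GC v by exact: MII_GC tT (proj1 uv).
have /occursP [pv0 ppv0] := ov; have [vpv0 _ _] := ppv0.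
have [m hm] := limseq_dle ls2 (fun n => unit_UN (uu2 n)) (unit_UN uv) ppv0 (MII_fin (proj1 uv) vpv0).
have eab : dp_mul (u2 m) v = u2 m.
  apply: absorb (hm m (leqnn _)); [exact: unit_UN (uu2 m)|exact: GC_TR (NGC (N2 m))|
    exact: unit_UN uv|exact: GC_TC GCv|exact: GC_UQ GCv].
have o1' : occurs_at (Lu c1) w2.
  apply: occurs_pteq pw12 o1; exact: TC_mul (GC_TC (NGC Nc1)) (TC_inv (GC_TC (NGC Nc1))).
have [_ _ oc2 _ _] := ls2.
have /occursP [pu ppu] := oc2 m; have [upu puw pux] := ppu.
have comp_i : forall c, N c -> occurs_at (Lu c) w2 -> composable T (u2 m) c /\
    occurs_at (Lu (dp_mul (u2 m) c)) w2.
  move=> c Nc /occursL [pc [cpc pcw pcx]].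
  have [hx hy] := GC_mem (NGC (N2 m)) upu; have [hx' hy'] := GC_mem (NGC Nc) cpc.
  have eyx : dpy pu = dpx pc by rewrite -(unit_UN (uu2 m) upu) pux pcx.
  split.
    apply: (CC ls2 (fun n => NM (N2 n)) (GC_TC (NGC (N2 m))) (GC_TC (NGC Nc)) upu cpc) => //.
    - exact: MII_fin (NM (N2 m)) upu.
    - exact: MII_fin (NM Nc) cpc.
  apply/occursL; eexists; apply: placed_mul ppu cpc _ pcw; by rewrite eyx.
have [cc1 oL1] := comp_i _ Nc1 o1'; have [cc2 oL2] := comp_i _ Nc2 o2.
have ef : dp_mul (u2 m) c1 = dp_mul (u2 m) c2.
  by rewrite -{1}eab dp_mulA -ev -dp_mulA eab.
have Nf : N (dp_mul (u2 m) c2) by exact: Nmul.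
have [oLD _] := LPH ls2 N2 uu2 ls2' Nf oL2.
have /occursL [pd [Dpd pdw pdx]] := oLD.
have h1 := hmul (N2 m) Nc1 cc1; rewrite ef in h1.
have h2 := hmul (N2 m) Nc2 cc2.
have [_ _ oc2' _ _] := ls2'.
have /occursP [pum ppum] := oc2' m; have [upum _ _] := ppum.
have [M hMM] := ev2 (limseq_dom ls2' (MII_fin (hM Nf) Dpd) pdw)
  (limseq_dle ls2' (fun n => unit_UN (ph_unit (N2 n) (uu2 n))) (unit_UN (ph_unit (N2 m) (uu2 m)))
     ppum (MII_fin (hM (N2 m)) upum)).
have [hdom hdle] := hMM M (leqnn _).
have /occursP [pV ppV] := oc2' M; have [VpV _ pVx] := ppV.
pose V := phih (u2 M).
have uV : is_unit T' V by exact: ph_unit.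
have GCV : GC V by exact: phGC.
have aV : dp_mul V (phih (u2 m)) = V.
  apply: absorb hdle; [exact: unit_UN uV|exact: GC_TR GCV|exact: unit_UN (ph_unit (N2 m) (uu2 m))|
    exact: GC_TC (phGC (N2 m))|exact: GC_UQ (phGC (N2 m))].
have msi : forall c, N c -> dle (dp_mul (phih (u2 m)) (phih c)) (phih (dp_mul (u2 m) c2)) ->
    dp_mul V (phih c) = dp_mul V (phih (dp_mul (u2 m) c2)).
  move=> c Nc hle.
  rewrite -aV dp_mulA.
  rewrite (mul_sub (pv := pV) (pd := pd) _ _ _ _ _ _ _ hle) //.
  - by rewrite aV.
  - exact: unit_UN uV.
  - exact: GC_TR GCV.
  - exact: GC_TC (phGC Nf).
  - exact: GC_TR (phGC Nf).
  - exact: GC_UQ (phGC Nf).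
  - exact: TC_mul (GC_TC (phGC (N2 m))) (GC_TC (phGC Nc)).
  - exact: UQ_mul (GC_UQ (phGC (N2 m))) (GC_UQ (phGC Nc)).
  - by rewrite pVx pdx.
  - exact: (hdom pV ppV).
have eV : dp_mul V (phih c2) = dp_mul V (phih c1) by rewrite (msi _ Nc1 h1) (msi _ Nc2 h2).
have ovV : occurs_at V w2' by apply/occursP; exists pV.
have := gcl_eq tT' ls2' (fun n => ph_unit (N2 n) (uu2 n)) (pteq_sym p12') uV ovV eV.
by move=> ->.
Qed.


Definition phi (g : set (ptil R d * set (dpp R d))) : set (ptil R d' * set (dpp R d')) :=
  match pselect (exists g', Good g g') with
  | left h => projT1 (cid h)
  | right _ => set0
  end.

Lemma phiE g g' : Good g g' -> phi g = g'.
Proof.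
rewrite /phi => hg; case: pselect => [h|nh]; last by exfalso; apply: nh; exists g'.
exact: WD (projT2 (cid h)) hg.
Qed.

Lemma clause1 u w c : approx_seq T u -> (forall n, N (u n)) -> is_lim u w ->
  N c -> occurs_at (Lu c) w ->
  [/\ approx_seq T' (phih \o u),
      (exists w', hull T' w' /\ is_lim (phih \o u) w') &
      forall w', is_lim (phih \o u) w' ->
        occurs_at (Lu (phih c)) w' /\ phi (gclN T N w c) = gcl T' w' (phih c)].
Proof.
move=> au Nu lu Nc oL; have [ls _ apx ex lsp] := LIM au Nu lu.
split => // w' lw'; have [uu _ _] := au.
split; first exact: (LPH ls Nu uu (lsp _ lw') Nc oL).1.
apply: phiE; exists u, w, c, w'; split; split => //.
Qed.

Lemma data_of w c : XN T N (w, c) -> exists u, [/\ approx_seq T u, (forall n, N (u n)) & is_lim u w].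
Proof. by move=> [Ow _ _]; have [u [a b e]] := appr Ow; exists u. Qed.

Lemma clause2 g : RN T N g -> Rgpd T' (phi g).
Proof.
move=> [w [c [xw ->]]]; have [Ow Nc oL] := xw.
have [u [au Nu lu]] := data_of xw.
have [_ [w0 [hw0 lw0]] h] := clause1 au Nu lu Nc oL.
have [oL' ->] := h _ lw0.
by exists w0, (phih c); split => //; exact: hM.
Qed.


Lemma mulV_eq (u : nat -> set (dpp R d)) w0 c c' : limseq (phih \o u) w0 -> (forall n, N (u n)) ->
  (forall n, is_unit T (u n)) -> N c -> N c' -> composable T c c' ->
  occurs_at (Lu (phih (dp_mul c c'))) w0 ->
  gcl T' w0 (dp_mul (phih c) (phih c')) = gcl T' w0 (phih (dp_mul c c')).
Proof.
move=> ls0 Nu uu Nc Nc' ccc oLD.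
have Ncc := Nmul Nc Nc' ccc.
have /occursL [pd [Dpd pdw pdx]] := oLD.
have [M hMM] := limseq_dom ls0 (MII_fin (hM Ncc) Dpd) pdw.
have [_ _ oc0 _ _] := ls0.
have /occursP [pV ppV] := oc0 M; have [VpV _ pVx] := ppV.
pose V := phih (u M).
have uV : is_unit T' V by exact: ph_unit.
have GCV : GC V by exact: phGC.
have ms : dp_mul V (dp_mul (phih c) (phih c')) = dp_mul V (phih (dp_mul c c')).
  apply: (mul_sub (pv := pV) (pd := pd)) (hmul Nc Nc' ccc) _ _ _ _ => //.
  - exact: unit_UN uV.
  - exact: GC_TR GCV.
  - exact: GC_TC (phGC Ncc).
  - exact: GC_TR (phGC Ncc).
  - exact: GC_UQ (phGC Ncc).
  - exact: TC_mul (GC_TC (phGC Nc)) (GC_TC (phGC Nc')).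
  - exact: UQ_mul (GC_UQ (phGC Nc)) (GC_UQ (phGC Nc')).
  - by rewrite pVx pdx.
  - exact: (hMM M (leqnn _) pV ppV).
have ovV : occurs_at V w0 by apply/occursP; exists pV.
exact: gcl_eq tT' ls0 (fun n => ph_unit (Nu n) (uu n)) (pteq_refl _) uV ovV ms.
Qed.

Lemma clause3 g h k : gmulN T N g h k -> gmul T' (phi g) (phi h) (phi k).
Proof.
move=> [w [c [c' [w1 [[xw Nc'] mv xw1 ccc [-> -> ->]]]]]].
have [Ow Nc oL] := xw; have [Ow1 _ oL1] := xw1.
have [u [au Nu lu]] := data_of xw.
have [u1 [au1 Nu1 lu1]] := data_of xw1.
have [ls _ _ [w0 [hw0 lw0]] lsp] := LIM au Nu lu.
have ls0 := lsp _ lw0.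
have [uu _ _] := au; have [uu1 _ _] := au1.
have [_ _ h0] := clause1 au Nu lu Nc oL.
have [oLc0 eg] := h0 _ lw0.
have /occursL [pc [cpc pcw pcx]] := oLc0.
pose W1 := PT (pS w0) (dpy pc).
have [p cp [pw px ew1]] := mv.
have [tw0 sw0 ow0] := lw0.
have [hxp hyp] := GC_mem (NGC Nc) cp.
have lW1 : is_lim (phih \o u1) W1.
  split => //.
  - by apply: pcw; have [_ hy] := GC_mem (phGC Nc) cpc; exact: hy.
  move=> n /=.
  have [_ _ ocu1] := lu1.
  have /occursP [r [ur rw1 rx]] := ocu1 n.
  rewrite ew1 /= in rw1 rx.
  have [hxr hyr] := GC_mem (NGC (Nu1 n)) ur.
  have cf : composable T c (u1 n).
    apply: (CC ls (fun n => NM (Nu n)) (GC_TC (NGC Nc)) (GC_TC (NGC (Nu1 n))) cp ur) => //.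
    - exact: MII_fin (NM Nc) cp.
    - exact: MII_fin (NM (Nu1 n)) ur.
  have Nf := Nmul Nc (Nu1 n) cf.
  have oLf : occurs_at (Lu (dp_mul c (u1 n))) w.
    by apply/occursL; eexists; apply: placed_mul (_ : placed c w p) ur rx rw1.
  have [oLf0 _] := LPH ls Nu uu ls0 Nf oLf.
  have /occursL [pf [fpf pfw pfx]] := oLf0.
  have hle := hmul Nc (Nu1 n) cf.
  have [e [ee sube exe _]] := dle_at hle (TC_mul (GC_TC (phGC Nc)) (GC_TC (phGC (Nu1 n))))
    (GC_TR (phGC Nf)) fpf.
  move: ee sube exe => [a [b [ca ub eab ->]]] /= sube exe.
  have ea : a = pc by apply: (GC_UQ (phGC Nc)) ca cpc _; rewrite exe pfx pcx.
  subst a.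
  exists b => //; split.
  + by move=> t hb; apply: pfw; apply: sube; right.
  + by rewrite /W1 /= -eab.
have [_ _ h1] := clause1 au1 Nu1 lu1 Nc' oL1.
have [oLc'1 eh] := h1 _ lW1.
have Ncc := Nmul Nc Nc' ccc.
have oLcc : occurs_at (Lu (dp_mul c c')) w.
  have /occursL [p' [cp' p'w p'x]] := oL1.
  rewrite ew1 /= in p'w p'x.
  by apply/occursL; eexists; apply: placed_mul (_ : placed c w p) cp' p'x p'w.
have [_ _ hk] := clause1 au Nu lu Ncc oLcc.
have [oLD ek] := hk _ lw0.
exists w0, (phih c), (phih c'), W1; split.
- by split => //; exact: hM.
- by exists pc.
- exact: oLc'1.
- exact: hcomp.
split => //.
by rewrite ek (mulV_eq ls0 Nu uu Nc Nc' ccc oLD).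
Qed.


Lemma clause4 V : gopen T' V ->
  XNopen T N [set q | XN T N q /\ V (phi (gclN T N q.1 q.2))].
Proof.
move=> [VR Vop]; split; first by move=> q [].
move=> w c [xw Vg].
have [Ow Nc oL] := xw.
have [u [au Nu lu]] := data_of xw.
have [ls _ _ [w0 [hw0 lw0]] lsp] := LIM au Nu lu.
have ls0 := lsp _ lw0; have [uu _ _] := au.
have [_ _ h0] := clause1 au Nu lu Nc oL.
have [oLc0 eg] := h0 _ lw0.
rewrite /= eg in Vg.
have [n [f [Mf Of clos]]] := Vop _ Vg.
have [_ _ oc0 _ _] := ls0.
have mem0 : gcl T' w0 (phih c) (w0, phih c).
  split => //=; [exact: pteq_refl|exact: hM|].
  by exists (phih (u 0%N)); split => //; [exact: ph_unit|exact: oc0].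
have info : forall i, (i < n)%N -> exists vi, [/\ is_unit T' vi, occurs_at vi w0,
    occurs_at (Lu (f i)) w0 & dp_mul vi (phih c) = dp_mul vi (f i)].
  move=> i ilt; have [wi [hwi oLi ei]] := Of i ilt.
  move: mem0; rewrite ei => -[/= pwi _ _ [vi [uvi ovi evi]]].
  have o1 := occurs_pteq (GC_TC (MII_GC tT' (proj1 uvi))) pwi ovi.
  have o2 := occurs_pteq (TC_Lu (MII_GC tT' (Mf i ilt))) pwi oLi.
  by exists vi; split => //; rewrite evi.
pose Pr := fun i m => (i < n)%N -> exists vi, [/\ is_unit T' vi, dle vi (phih (u m)),
    dle (Lu (f i)) (phih (u m)) & dp_mul vi (phih c) = dp_mul vi (f i)].
have hPr : forall i, (i < n)%N -> exists m0, forall m, (m0 <= m)%N -> Pr i m.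
  move=> i ilt; have [vi [uvi ovi oLi evi]] := info i ilt.
  have /occursP [pv ppv] := ovi; have [vpv _ _] := ppv.
  have /occursL [pf [fpf pfw pfx]] := oLi.
  have GCf := MII_GC tT' (Mf i ilt).
  have pLf : placed (Lu (f i)) w0 (DP (dpP pf) (dpx pf) (dpx pf)).
    by split => //; apply/(LuE _ (GC_UQy GCf)); exists pf.
  have [m0 hm0] := ev2
    (limseq_dle ls0 (fun n => unit_UN (ph_unit (Nu n) (uu n))) (unit_UN uvi) ppv
       (MII_fin (proj1 uvi) vpv))
    (limseq_dle ls0 (fun n => unit_UN (ph_unit (Nu n) (uu n))) (UN_Lu GCf) pLf
       (MII_fin (Mf i ilt) fpf)).
  exists m0 => m mm0 _; have [h1 h2] := hm0 m mm0.
  by exists vi; split.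
have [M0 hM0] := ev_fin hPr.
have [_ _ ocu _ _] := ls.
have /occursP [pu ppu] := ocu M0; have [upu puw pux] := ppu.
have [tw sw _ _ _] := ls.
have [r [r0 hr]] := dom_fin tw sw (MII_fin (NM (Nu M0)) upu) puw.
exists r => w'' xw'' [r' rr' [P [P' [[PS cP _] [P'S _ _] [v [eP' eps]]]]]].
have FP : dpP pu `<=` P.
  apply: hr PS _; apply: coversS cP => //; apply: regionS; exact: ltW.
have ou'' : occurs_at (u M0) w''.
  apply/occursP; exists (dptr v pu); split.
  - exact: (GC_TC (NGC (Nu M0)) v upu).
  - by apply: subset_trans P'S; rewrite eP'; exact: ptrS.
  - by rewrite eps /= pux.
split => //.
have [Ow'' _ _] := xw''.
have [u'' [au'' Nu'' lu'']] := data_of xw''.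
have [ls'' _ _ [w1 [hw1 lw1]] lsp''] := LIM au'' Nu'' lu''.
have ls1 := lsp'' _ lw1; have [uu'' _ _] := au''.
have [_ _ h1] := clause1 au'' Nu'' lu'' Nc (let: And3 _ _ o := xw'' in o).
have [oLc1 e1] := h1 _ lw1.
rewrite /= e1.
have oM1 : occurs_at (phih (u M0)) w1 := KC ls'' Nu'' uu'' ls1 (Nu M0) (uu M0) ou''.
apply: clos.
  by exists w1, (phih c); split => //; exact: hM.
move=> i ilt; have [vi [uvi d1 d2 evi]] := hM0 M0 (leqnn _) i ilt ilt.
exists w1; split => //.
  apply: occurs_dle d2 _ _ oM1.
  - exact: TC_Lu (MII_GC tT' (Mf i ilt)).
  - exact: GC_TR (phGC (Nu M0)).
have ov1 : occurs_at vi w1.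
  apply: occurs_dle d1 _ _ oM1.
  - exact: GC_TC (MII_GC tT' (proj1 uvi)).
  - exact: GC_TR (phGC (Nu M0)).
exact: gcl_eq tT' ls1 (fun n => ph_unit (Nu'' n) (uu'' n)) (pteq_refl _) uvi ov1 evi.
Qed.

End Main.

Theorem mainTheorem8 (R : realType) (d d' : nat)
  (T : set (tile R d)) (T' : set (tile R d'))
  (N : set (set (dpp R d))) (phih : set (dpp R d) -> set (dpp R d')) :
  is_tiling T -> is_tiling T' ->
  sub_almost_groupoid T N -> approximating T N ->
  (forall c, N c -> MII T' (phih c)) ->
  (forall c c', N c -> N c' -> composable T c c' ->
     composable T' (phih c) (phih c')) ->
  (forall c, N c -> phih (dp_inv c) = dp_inv (phih c)) ->
  (forall c c', N c -> N c' -> composable T c c' ->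
     dle (dp_mul (phih c) (phih c')) (phih (dp_mul c c'))) ->
  (exists2 t : R, 0 < t & exists K : R, forall u, N u -> is_unit T u ->
     `|rad (phih u) - t * rad u| <= K) ->
  exists phi : set (ptil R d * set (dpp R d)) -> set (ptil R d' * set (dpp R d')),
    [/\ (* well defined: phi [lim u, c]_N = [lim phih(u), phih c] *)
        (forall (u : nat -> set (dpp R d)) (w : ptil R d) (c : set (dpp R d)),
           approx_seq T u -> (forall n, N (u n)) -> is_lim u w ->
           N c -> occurs_at (Lu c) w ->
           [/\ approx_seq T' (phih \o u),
               (exists w', hull T' w' /\ is_lim (phih \o u) w') &
               forall w', is_lim (phih \o u) w' ->
                 occurs_at (Lu (phih c)) w' /\
                 phi (gclN T N w c) = gcl T' w' (phih c)]),
        (* groupoid homomorphism R_N -> R' *)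
        (forall g, RN T N g -> Rgpd T' (phi g)),
        (forall g h k, gmulN T N g h k -> gmul T' (phi g) (phi h) (phi k)) &
        (* continuity *)
        (forall V, gopen T' V ->
           XNopen T N [set q | XN T N q /\ V (phi (gclN T N q.1 q.2))])].
Proof.
move=> tT tT' sag appr hM hcomp hinv hmul hrad.
exists (@phi R d d' T T' N phih); split.
- move=> u w c au Nu lu Nc oL; eapply clause1; eauto.
- move=> g; eapply clause2; eauto.
- move=> g h k; eapply clause3; eauto.
- move=> V; eapply clause4; eauto.
Qed.
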